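(* Let $G=(V,E,m,w)$ be a weighted graph admitting an intrinsic metric $\rho$ such that every ball $B_R(x)=\{y\in V:\rho(y,x)\le R\}$ ($x\in V$, $R>0$) is a finite set and the jump size $s:=\sup_{x\sim y}\rho(x,y)$ is finite. Suppose $G$ has polynomial volume growth with respect to $\rho$, i.e. there are $x_0\in V$ and constants $\alpha, C$ such that $m(B_R(x_0))\le C(1+R)^{\alpha}$ for all $R>0$. Then for all real $k\ge 1$, $$\dim \mathcal{P}_{2k}(G)\le (k+1)\dim \mathcal{H}_{2k}(G).$$
   Context: A weighted graph $G=(V,E,m,w)$ consists of a locally finite, simple, undirected, connected graph $(V,E)$, a symmetric edge weight $w:E\to(0,\infty)$, $\{x,y\}\mapsto w_{xy}=w_{yx}$ (extended by $w_{xy}=0$ if $x\not\sim y$), and a vertex weight $m:V\to(0,\infty)$; $m(\Omega)=\sum_{x\in\Omega}m_x$. The Laplacian is $\Delta f(x)=\sum_{y\sim x}\frac{w_{xy}}{m_x}(f(y)-f(x))$. A (pseudo)metric $\rho:V\times V\to[0,\infty)$ (symmetric, triangle inequality, $\rho(x,x)=0$) is intrinsic if $\sum_{y\sim x}w_{xy}\rho^2(x,y)\le m_x$ for all $x\in V$. $\mathcal{H}_k(G)$ is the space of functions $f$ on $V$ with $\Delta f=0$ such that there exist $x_0\in V$ and $C_f$ with $\sup_{x\in B_R(x_0)}|f(x)|\le C_f(1+R)^k$ for all $R>0$. An ancient solution of the heat equation is a function $u(x,t)$ on $V\times(-\infty,0]$, differentiable in $t$, with $\partial_t u(x,t)=\Delta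 u(x,t)$ for all $x\in V$, $t\le 0$. $\mathcal{P}_k(G)$ is the space of ancient solutions $u$ for which there are $x_0\in V$ and $C_u$ with $\sup_{(x,t)\in B_R(x_0)\times[-R^2,0]}|u(x,t)|\le C_u(1+R)^k$ for all $R>0$. *)

(* Defs.v *)
From Stdlib Require Import Reals List Relations.
From Coquelicot Require Import Coquelicot.
Open Scope R_scope.

Fixpoint lsum {A : Type} (F : A -> R) (l : list A) : R :=
  match l with nil => 0 | a :: l' => F a + lsum F l' end.

Fixpoint nsum (n : nat) (F : nat -> R) : R :=
  match n with O => 0 | S n' => nsum n' F + F n' end.

(* A weighted graph G = (V,E,m,w): locally finite, simple, undirected, connected.
   Local finiteness is encoded by a duplicate-free list [nbrs x] of the neighbours of x. *)
Record wgraph (V : Type) := WGraph {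
  adj : V -> V -> Prop;
  nbrs : V -> list V;
  ew : V -> V -> R;
  vm : V -> R;
  nbrs_nodup : forall x, NoDup (nbrs x);
  nbrs_spec : forall x y, In y (nbrs x) <-> adj x y;
  adj_sym : forall x y, adj x y -> adj y x;
  adj_irrefl : forall x, ~ adj x x;
  connected : forall x y, clos_refl_trans V adj x y;
  ew_sym : forall x y, ew x y = ew y x;
  ew_pos : forall x y, adj x y -> 0 < ew x y;
  ew_zero : forall x y, ~ adj x y -> ew x y = 0;
  vm_pos : forall x, 0 < vm x
}.
Arguments adj {V}. Arguments nbrs {V}. Arguments ew {V}. Arguments vm {V}.

Definition laplacian {V} (G : wgraph V) (f : V -> R) (x : V) : R :=
  lsum (fun y => ew G x y / vm G x * (f y - f x)) (nbrs G x).

Definition intrinsic_metric {V} (G : wgraph V) (rho : V -> V -> R) : Prop :=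
  (forall x y, 0 <= rho x y) /\
  (forall x, rho x x = 0) /\
  (forall x y, rho x y = rho y x) /\
  (forall x y z, rho x z <= rho x y + rho y z) /\
  (forall x, lsum (fun y => ew G x y * (rho x y) ^ 2) (nbrs G x) <= vm G x).

Definition in_ball {V} (rho : V -> V -> R) (x : V) (r : R) (y : V) : Prop := rho y x <= r.

Definition finite_balls {V} (rho : V -> V -> R) : Prop :=
  forall x r, 0 < r -> exists l : list V, forall y, in_ball rho x r y -> In y l.

Definition finite_jump_size {V} (G : wgraph V) (rho : V -> V -> R) : Prop :=
  exists s, forall x y, adj G x y -> rho x y <= s.

(* polynomial volume growth: m(B_R(x0)) <= C (1+R)^alpha for all R > 0;
   m(B_R(x0)) is the sum of m over an exact duplicate-free enumeration of the ball. *)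
Definition polynomial_volume_growth {V} (G : wgraph V) (rho : V -> V -> R) : Prop :=
  exists (x0 : V) (alpha C : R), forall r, 0 < r ->
    forall l : list V, NoDup l -> (forall y, In y l <-> in_ball rho x0 r y) ->
      lsum (vm G) l <= C * Rpower (1 + r) alpha.

Definition in_H {V} (G : wgraph V) (rho : V -> V -> R) (k : R) (f : V -> R) : Prop :=
  (forall x, laplacian G f x = 0) /\
  exists (x0 : V) (C : R), forall r, 0 < r ->
    forall x, in_ball rho x0 r x -> Rabs (f x) <= C * Rpower (1 + r) k.

(* ancient solution of the heat equation on V x (-oo, 0]; u is differentiable in t
   (two-sided for t < 0, from the left at t = 0) with ∂_t u = Δ u. *)
Definition ancient_solution {V} (G : wgraph V) (u : V -> R -> R) : Prop :=
  forall x t, t <= 0 ->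
    let L := laplacian G (fun y => u y t) x in
    filterlim (fun h => (u x (t + h) - u x t) / h) (at_left 0) (locally L) /\
    (t < 0 -> filterlim (fun h => (u x (t + h) - u x t) / h) (at_right 0) (locally L)).

Definition in_P {V} (G : wgraph V) (rho : V -> V -> R) (k : R) (u : V -> R -> R) : Prop :=
  ancient_solution G u /\
  exists (x0 : V) (C : R), forall r, 0 < r ->
    forall x t, in_ball rho x0 r x -> - r ^ 2 <= t <= 0 ->
      Rabs (u x t) <= C * Rpower (1 + r) k.

Definition has_indep {X : Type} (D : X -> Prop) (S : (X -> R) -> Prop) (n : nat) : Prop :=
  exists f : nat -> X -> R,
    (forall i, (i < n)%nat -> S (f i)) /\
    (forall c : nat -> R,
        (forall x, D x -> nsum n (fun i => c i * f i x) = 0) ->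
        forall i, (i < n)%nat -> c i = 0).

(* dim S1 <= a * dim S2 (dimensions in N ∪ {oo}, a > 0):
   every finite independent family in S1 of size N forces an independent family in S2
   of some size M with N <= a * M. *)
Definition dim_le_mul {X Y : Type} (D1 : X -> Prop) (S1 : (X -> R) -> Prop)
    (a : R) (D2 : Y -> Prop) (S2 : (Y -> R) -> Prop) : Prop :=
  forall N, has_indep D1 S1 N -> exists M, has_indep D2 S2 M /\ INR N <= a * INR M.

Definition spacetime_dom {V} (p : V * R) : Prop := snd p <= 0.
Definition P_space {V} (G : wgraph V) (rho : V -> V -> R) (k : R) (g : V * R -> R) : Prop :=
  exists u, in_P G rho k u /\ forall p, spacetime_dom p -> g p = u (fst p) (snd p).

(* Main.v *)
Require Import Defs.
From Stdlib Require Import Reals Lra Lia List Permutation Classical Psatz Factorial Binomial ZArith.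
From Stdlib Require Import ClassicalEpsilon.
From Coquelicot Require Import Coquelicot.
Open Scope R_scope.


Lemma lsum_app {A} (F : A -> R) l1 l2 : lsum F (l1 ++ l2) = lsum F l1 + lsum F l2.
Proof. induction l1; simpl; [lra|]. rewrite IHl1; lra. Qed.

Lemma lsum_ext_in {A} (F G : A -> R) l : (forall x, In x l -> F x = G x) -> lsum F l = lsum G l.
Proof. induction l; simpl; intros H; [lra|]. rewrite H by auto. rewrite IHl by auto. lra. Qed.

Lemma lsum_plus {A} (F G : A -> R) l : lsum (fun x => F x + G x) l = lsum F l + lsum G l.
Proof. induction l; simpl; [lra|]. rewrite IHl; lra. Qed.

Lemma lsum_minus {A} (F G : A -> R) l : lsum (fun x => F x - G x) l = lsum F l - lsum G l.
Proof. induction l; simpl; [lra|]. rewrite IHl; lra. Qed.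

Lemma lsum_scal {A} (c : R) (F : A -> R) l : lsum (fun x => c * F x) l = c * lsum F l.
Proof. induction l; simpl; [lra|]. rewrite IHl; lra. Qed.

Lemma lsum_zero {A} (l : list A) : lsum (fun _ => 0) l = 0.
Proof. induction l; simpl; lra. Qed.

Lemma lsum_le {A} (F G : A -> R) l : (forall x, In x l -> F x <= G x) -> lsum F l <= lsum G l.
Proof. induction l; simpl; intros H; [lra|]. pose proof (H a (or_introl eq_refl)).
  assert (lsum F l <= lsum G l) by (apply IHl; auto). lra. Qed.

Lemma lsum_nonneg {A} (F : A -> R) l : (forall x, In x l -> 0 <= F x) -> 0 <= lsum F l.
Proof. intros H. rewrite <- (lsum_zero l). apply lsum_le; auto. Qed.

Lemma lsum_abs {A} (F : A -> R) l : Rabs (lsum F l) <= lsum (fun x => Rabs (F x)) l.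
Proof. induction l; simpl. rewrite Rabs_R0; lra.
  eapply Rle_trans. apply Rabs_triang. lra. Qed.

Lemma lsum_perm {A} (F : A -> R) l1 l2 : Permutation l1 l2 -> lsum F l1 = lsum F l2.
Proof. induction 1; simpl; lra. Qed.

Lemma lsum_extract {A} (F : A -> R) (a : A) l : In a l ->
  exists l', Permutation l (a :: l') /\ (NoDup l -> NoDup (a :: l')) /\
    (forall x, In x l' -> In x l) /\ (forall x, In x l -> x <> a -> In x l') /\
    lsum F l = F a + lsum F l'.
Proof.
  intros Ha. destruct (in_split a l Ha) as [p [q ->]].
  exists (p ++ q). assert (P : Permutation (p ++ a :: q) (a :: p ++ q)).
  { symmetry. apply Permutation_middle. }
  repeat split; auto.
  - intros ND. apply (Permutation_NoDup P ND).
  - intros x Hx. apply in_app_or in Hx. apply in_or_app. simpl. tauto.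
  - intros x Hx Hne. apply in_app_or in Hx. apply in_or_app. simpl in Hx. destruct Hx as [H|[H|H]]; auto. congruence.
  - rewrite (lsum_perm F _ _ P). reflexivity.
Qed.

Lemma lsum_support {A} (F : A -> R) l1 l2 : NoDup l1 -> NoDup l2 ->
  (forall x, F x <> 0 -> (In x l1 <-> In x l2)) -> lsum F l1 = lsum F l2.
Proof.
  revert l2. induction l1 as [|a l1 IH]; intros l2 N1 N2 H.
  - simpl. induction l2 as [|b l2 IH2]; simpl; [reflexivity|].
    assert (F b = 0). { destruct (Req_dec (F b) 0); auto. apply H in H0. simpl in H0. destruct H0 as [_ H0]. destruct (H0 (or_introl eq_refl)). }
    rewrite H0. rewrite <- IH2. lra. inversion N2; auto.
    intros x Hx. pose proof (H x Hx). simpl in *. tauto.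
  - inversion N1; subst. simpl.
    destruct (classic (In a l2)) as [Ha|Ha].
    + destruct (lsum_extract F a l2 Ha) as [l' [P [ND [S1 [S2 E]]]]].
      rewrite E. rewrite (IH l'); auto. 
      * specialize (ND N2). inversion ND; auto.
      * intros x Hx. specialize (H x Hx). split.
        -- intros Hl. apply S2. apply H. simpl; auto. intros ->. contradiction.
        -- intros Hl. assert (In x (a :: l1)) by (apply H; apply S1; auto).
           destruct H0; auto. subst. specialize (ND N2). inversion ND. contradiction.
    + assert (F a = 0). { destruct (Req_dec (F a) 0); auto. exfalso. apply Ha. apply H; simpl; auto. }
      rewrite H0, (IH l2); auto. lra.
      intros x Hx. specialize (H x Hx). split. intros; apply H; simpl; auto.
      intros Hl. apply H in Hl. destruct Hl; auto. subst. congruence.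
Qed.

Lemma lsum_incl_le {A} (F : A -> R) l1 l2 : NoDup l1 -> incl l1 l2 ->
  (forall x, In x l2 -> 0 <= F x) -> lsum F l1 <= lsum F l2.
Proof.
  revert l2. induction l1 as [|a l1 IH]; intros l2 N1 I H.
  - simpl. apply lsum_nonneg; auto.
  - inversion N1; subst. simpl.
    destruct (lsum_extract F a l2 (I a (or_introl eq_refl))) as [l' [P [ND [S1 [S2 E]]]]].
    rewrite E. assert (lsum F l1 <= lsum F l'); [|lra].
    apply IH; auto. intros x Hx. apply S2. apply I; simpl; auto. intros ->. contradiction.
Qed.

Lemma lsum_swap {A B} (F : A -> B -> R) l1 l2 :
  lsum (fun x => lsum (fun y => F x y) l2) l1 = lsum (fun y => lsum (fun x => F x y) l1) l2.
Proof.
  induction l1; simpl. rewrite lsum_zero; reflexivity.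
  rewrite IHl1. rewrite <- lsum_plus. reflexivity.
Qed.

Lemma nsum_ext (n : nat) F G : (forall i, (i < n)%nat -> F i = G i) -> nsum n F = nsum n G.
Proof. induction n; simpl; intros H; [lra|]. rewrite IHn by (intros; apply H; lia). rewrite H by lia. lra. Qed.

Lemma nsum_plus n F G : nsum n (fun i => F i + G i) = nsum n F + nsum n G.
Proof. induction n; simpl; [lra|]. rewrite IHn; lra. Qed.

Lemma nsum_minus n F G : nsum n (fun i => F i - G i) = nsum n F - nsum n G.
Proof. induction n; simpl; [lra|]. rewrite IHn; lra. Qed.

Lemma nsum_scal n c F : nsum n (fun i => c * F i) = c * nsum n F.
Proof. induction n; simpl; [lra|]. rewrite IHn; lra. Qed.

Lemma nsum_zero n : nsum n (fun _ => 0) = 0.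
Proof. induction n; simpl; lra. Qed.

Lemma nsum_le n F G : (forall i, (i < n)%nat -> F i <= G i) -> nsum n F <= nsum n G.
Proof. induction n; simpl; intros H; [lra|].
  assert (nsum n F <= nsum n G) by (apply IHn; intros; apply H; lia).
  assert (F n <= G n) by (apply H; lia). lra. Qed.

Lemma nsum_abs n F : Rabs (nsum n F) <= nsum n (fun i => Rabs (F i)).
Proof. induction n; simpl. rewrite Rabs_R0; lra.
  eapply Rle_trans. apply Rabs_triang. lra. Qed.

Lemma nsum_shift n F : nsum (S n) F = F 0%nat + nsum n (fun i => F (S i)).
Proof. induction n; simpl in *; [lra|]. rewrite IHn. lra. Qed.

Lemma nsum_lsum {A} n (F : nat -> A -> R) l :
  nsum n (fun i => lsum (F i) l) = lsum (fun x => nsum n (fun i => F i x)) l.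
Proof. induction n; simpl. rewrite lsum_zero; reflexivity.
  rewrite IHn. rewrite <- lsum_plus. reflexivity. Qed.

Lemma nsum_swap n m (F : nat -> nat -> R) :
  nsum n (fun i => nsum m (fun j => F i j)) = nsum m (fun j => nsum n (fun i => F i j)).
Proof. induction n; simpl. rewrite nsum_zero; reflexivity.
  rewrite IHn. rewrite <- nsum_plus. reflexivity. Qed.

Lemma nsum_single n k c : (k < n)%nat ->
  nsum n (fun i => if Nat.eq_dec i k then c else 0) = c.
Proof. induction n; intros H; simpl; [lia|].
  destruct (Nat.eq_dec n k).
  - subst. rewrite nsum_ext with (G := fun _ => 0). rewrite nsum_zero; lra.
    intros i Hi. destruct (Nat.eq_dec i k); [lia|auto].
  - rewrite IHn by lia. lra.
Qed.

Lemma choice_fun {A B} (P : A -> B -> Prop) : (forall a, exists b, P a b) -> exists f : A -> B, forall a, P a (f a).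
Proof. intros H. exists (fun a => proj1_sig (constructive_indefinite_description _ (H a))).
  intros a. exact (proj2_sig (constructive_indefinite_description _ (H a))). Qed.


Lemma ew_nonneg {V} (G : wgraph V) x y : 0 <= ew G x y.
Proof. destruct (classic (adj G x y)). apply Rlt_le, ew_pos; auto. rewrite ew_zero; auto; lra. Qed.

Lemma ew_adj {V} (G : wgraph V) x y : ew G x y <> 0 -> adj G x y.
Proof. intros H. destruct (classic (adj G x y)); auto. rewrite ew_zero in H; auto. lra. Qed.

Lemma lap_mul {V} (G : wgraph V) f x :
  vm G x * laplacian G f x = lsum (fun y => ew G x y * (f y - f x)) (nbrs G x).
Proof. unfold laplacian. rewrite <- lsum_scal. apply lsum_ext_in. intros y _.
  pose proof (vm_pos _ G x). field. lra. Qed.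

Lemma lap_lin {V} (G : wgraph V) a b f g x :
  laplacian G (fun y => a * f y + b * g y) x = a * laplacian G f x + b * laplacian G g x.
Proof. unfold laplacian. rewrite <- !lsum_scal, <- lsum_plus. apply lsum_ext_in. intros; ring. Qed.

Lemma lap_nsum {V} (G : wgraph V) n (c : nat -> R) (f : nat -> V -> R) x :
  laplacian G (fun y => nsum n (fun i => c i * f i y)) x = nsum n (fun i => c i * laplacian G (f i) x).
Proof. unfold laplacian. 
  transitivity (lsum (fun y => nsum n (fun i => c i * (ew G x y / vm G x * (f i y - f i x)))) (nbrs G x)).
  apply lsum_ext_in. intros y _. rewrite <- nsum_minus, <- nsum_scal. apply nsum_ext. intros; ring.
  rewrite <- nsum_lsum. apply nsum_ext. intros. rewrite <- lsum_scal. reflexivity. Qed.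

Lemma lap_ext {V} (G : wgraph V) f g x : (forall y, f y = g y) -> laplacian G f x = laplacian G g x.
Proof. intros H. unfold laplacian. apply lsum_ext_in. intros. rewrite !H. reflexivity. Qed.

Definition lapn {V} (G : wgraph V) (n : nat) (f : V -> R) : V -> R := Nat.iter n (laplacian G) f.

Lemma lapn_S {V} (G : wgraph V) n f : lapn G (S n) f = laplacian G (lapn G n f).
Proof. reflexivity. Qed.

Lemma lapn_S' {V} (G : wgraph V) n f : lapn G (S n) f = lapn G n (laplacian G f).
Proof. unfold lapn. rewrite Nat.iter_succ_r. reflexivity. Qed.

Lemma lapn_ext {V} (G : wgraph V) n f g : (forall y, f y = g y) -> forall x, lapn G n f x = lapn G n g x.
Proof. induction n; intros H x; simpl. apply H. apply lap_ext. intros; apply IHn; auto. Qed.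

Lemma lapn_nsum {V} (G : wgraph V) k n (c : nat -> R) (f : nat -> V -> R) x :
  lapn G k (fun y => nsum n (fun i => c i * f i y)) x = nsum n (fun i => c i * lapn G k (f i) x).
Proof. revert x. induction k; intros x; simpl. reflexivity.
  rewrite (lap_ext G _ (fun y => nsum n (fun i => c i * lapn G k (f i) y))) by (intros; apply IHk).
  apply lap_nsum. Qed.

Lemma edge_swap {V} (G : wgraph V) (K : V -> V -> R) L : NoDup L ->
  (forall x y, adj G x y -> (K x y <> 0 \/ K y x <> 0) -> In x L) ->
  lsum (fun x => lsum (fun y => ew G x y * K x y) (nbrs G x)) L =
  lsum (fun x => lsum (fun y => ew G x y * K y x) (nbrs G x)) L.
Proof.
  intros ND HK.
  assert (E : forall (K' : V -> V -> R), (forall x y, adj G x y -> K' x y <> 0 -> In y L) ->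
     forall x, In x L -> lsum (fun y => ew G x y * K' x y) (nbrs G x) = lsum (fun y => ew G x y * K' x y) L).
  { intros K' HK' x Hx. apply lsum_support. apply nbrs_nodup. auto.
    intros y Hy. assert (A : adj G x y) by (apply ew_adj; intros E; apply Hy; rewrite E; ring).
    split; intros _. apply (HK' x y A). intros E; apply Hy; rewrite E; ring. apply nbrs_spec; auto. }
  rewrite (lsum_ext_in _ (fun x => lsum (fun y => ew G x y * K x y) L)).
  2:{ intros x Hx. apply (E K); auto. intros x0 y A Hk. apply (HK y x0 (adj_sym _ _ _ _ A)). auto. }
  rewrite (lsum_ext_in (fun x => lsum (fun y => ew G x y * K y x) (nbrs G x)) (fun x => lsum (fun y => ew G x y * K y x) L)).
  2:{ intros x Hx. apply (E (fun a b => K b a)); auto. intros x0 y A Hk. apply (HK y x0 (adj_sym _ _ _ _ A)). auto. }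
  rewrite lsum_swap. apply lsum_ext_in. intros x _. apply lsum_ext_in. intros y _. rewrite ew_sym. reflexivity.
Qed.

Definition esum {V} (G : wgraph V) (L : list V) (F : V -> V -> R) : R :=
  lsum (fun x => lsum (fun y => ew G x y * F x y) (nbrs G x)) L.

Lemma esum_plus {V} (G : wgraph V) L F1 F2 : esum G L (fun x y => F1 x y + F2 x y) = esum G L F1 + esum G L F2.
Proof. unfold esum. rewrite <- lsum_plus. apply lsum_ext_in. intros. rewrite <- lsum_plus. apply lsum_ext_in. intros; ring. Qed.
Lemma esum_scal {V} (G : wgraph V) L c F : esum G L (fun x y => c * F x y) = c * esum G L F.
Proof. unfold esum. rewrite <- lsum_scal. apply lsum_ext_in. intros. rewrite <- lsum_scal. apply lsum_ext_in. intros; ring. Qed.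
Lemma esum_le {V} (G : wgraph V) L F1 F2 : (forall x y, adj G x y -> F1 x y <= F2 x y) -> esum G L F1 <= esum G L F2.
Proof. intros H. unfold esum. apply lsum_le. intros x _. apply lsum_le. intros y Hy.
  apply nbrs_spec in Hy. apply Rmult_le_compat_l. apply ew_nonneg. auto. Qed.
Lemma esum_nonneg {V} (G : wgraph V) L F : (forall x y, adj G x y -> 0 <= F x y) -> 0 <= esum G L F.
Proof. intros H. unfold esum. apply lsum_nonneg. intros x _. apply lsum_nonneg. intros y Hy.
  apply nbrs_spec in Hy. apply Rmult_le_pos. apply ew_nonneg. auto. Qed.
Lemma esum_ext {V} (G : wgraph V) L F1 F2 : (forall x y, adj G x y -> F1 x y = F2 x y) -> esum G L F1 = esum G L F2.
Proof. intros H. unfold esum. apply lsum_ext_in. intros x _. apply lsum_ext_in. intros y Hy.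
  apply nbrs_spec in Hy. rewrite H; auto. Qed.

Lemma sbp {V} (G : wgraph V) (g v : V -> R) L : NoDup L ->
  (forall x, g x <> 0 -> In x L) -> (forall x y, adj G x y -> g x <> 0 -> In y L) ->
  lsum (fun x => vm G x * g x * laplacian G v x) L =
  - / 2 * esum G L (fun x y => (g y - g x) * (v y - v x)).
Proof.
  intros ND H1 H2.
  assert (E1 : lsum (fun x => vm G x * g x * laplacian G v x) L = esum G L (fun x y => g x * (v y - v x))).
  { unfold esum. apply lsum_ext_in. intros x _. 
    replace (vm G x * g x * laplacian G v x) with (g x * (vm G x * laplacian G v x)) by ring.
    rewrite lap_mul. rewrite <- lsum_scal. apply lsum_ext_in. intros; ring. }
  assert (E2 : esum G L (fun x y => g x * (v y - v x)) = esum G L (fun x y => g y * (v x - v y))).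
  { apply (edge_swap G (fun x y => g x * (v y - v x))). auto.
    intros x y A [Hk|Hk]. apply H1. intros E; apply Hk; rewrite E; ring.
    apply (H2 y x (adj_sym _ _ _ _ A)). intros E; apply Hk; rewrite E; ring. }
  rewrite E1. 
  assert (E3 : esum G L (fun x y => (g y - g x) * (v y - v x)) = - (esum G L (fun x y => g x * (v y - v x)) + esum G L (fun x y => g y * (v x - v y)))).
  { rewrite <- esum_plus. rewrite <- (Rmult_1_l (esum _ _ _)) at 1. 
    replace (- esum G L (fun x y => g x * (v y - v x) + g y * (v x - v y))) with (-1 * esum G L (fun x y => g x * (v y - v x) + g y * (v x - v y))) by ring.
    rewrite <- !esum_scal. apply esum_ext. intros; ring. }
  rewrite E3, <- E2. lra.
Qed.


Definition clamp z := Rmin 1 (Rmax 0 z).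
Lemma clamp_bounds z : 0 <= clamp z <= 1.
Proof. unfold clamp, Rmin, Rmax. repeat destruct Rle_dec; lra. Qed.
Lemma clamp_lip z z' : Rabs (clamp z - clamp z') <= Rabs (z - z').
Proof. unfold clamp, Rmin, Rmax. repeat destruct Rle_dec; unfold Rabs; repeat destruct Rcase_abs; lra. Qed.
Lemma clamp_1 z : 1 <= z -> clamp z = 1.
Proof. unfold clamp, Rmin, Rmax. repeat destruct Rle_dec; lra. Qed.
Lemma clamp_0 z : z <= 0 -> clamp z = 0.
Proof. unfold clamp, Rmin, Rmax. repeat destruct Rle_dec; lra. Qed.

Definition cutf {V} (rho : V -> V -> R) (x0 : V) (r : R) (x : V) : R := clamp ((2*r - rho x x0)/r).

Lemma cut_bounds {V} rho (x0 : V) r x : 0 <= cutf rho x0 r x <= 1.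
Proof. apply clamp_bounds. Qed.

Lemma cut_one {V} rho (x0 : V) r x : 0 < r -> rho x x0 <= r -> cutf rho x0 r x = 1.
Proof. intros. unfold cutf. apply clamp_1. apply Rmult_le_reg_r with r; auto.
  unfold Rdiv. rewrite Rmult_assoc, Rinv_l by lra. lra. Qed.

Lemma cut_zero {V} rho (x0 : V) r x : 0 < r -> 2*r <= rho x x0 -> cutf rho x0 r x = 0.
Proof. intros. unfold cutf. apply clamp_0. unfold Rdiv.
  assert (0 < /r) by (apply Rinv_0_lt_compat; auto). nra. Qed.

Lemma cut_lip {V} (G : wgraph V) rho (x0 : V) r x y : intrinsic_metric G rho -> 0 < r ->
  Rabs (cutf rho x0 r x - cutf rho x0 r y) <= rho x y / r.
Proof. intros [H0 [H1 [H2 [H3 H4]]]] Hr. unfold cutf.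
  eapply Rle_trans. apply clamp_lip.
  replace ((2 * r - rho x x0) / r - (2 * r - rho y x0) / r) with ((rho y x0 - rho x x0) / r) by (field; lra).
  unfold Rdiv. rewrite Rabs_mult. rewrite (Rabs_right (/r)) by (left; apply Rinv_0_lt_compat; auto).
  apply Rmult_le_compat_r. left; apply Rinv_0_lt_compat; auto.
  pose proof (H3 y x x0). pose proof (H3 x y x0). rewrite (H2 y x) in *. unfold Rabs; destruct Rcase_abs; lra.
Qed.

Lemma lip_sum {V} (G : wgraph V) rho (phi : V -> R) r x : intrinsic_metric G rho -> 0 < r ->
  (forall x y, Rabs (phi x - phi y) <= rho x y / r) ->
  lsum (fun y => ew G x y * (phi y - phi x)^2) (nbrs G x) <= vm G x / r^2.
Proof. intros HI Hr Hl. destruct HI as [H0 [H1 [H2 [H3 H4]]]].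
  apply Rle_trans with (lsum (fun y => / r^2 * (ew G x y * rho x y ^ 2)) (nbrs G x)).
  - apply lsum_le. intros y _. pose proof (ew_nonneg G x y).
    assert ((phi y - phi x)^2 <= / r^2 * rho x y^2).
    { specialize (Hl x y). rewrite <- Rabs_Ropp in Hl. replace (- (phi x - phi y)) with (phi y - phi x) in Hl by ring.
      replace (/ r^2 * rho x y^2) with ((rho x y / r)^2) by (field; lra).
      assert (0 <= Rabs (phi y - phi x)) by apply Rabs_pos.
      replace ((phi y - phi x)^2) with (Rabs (phi y - phi x) ^2). nra.
      rewrite RPow_abs, Rabs_right; auto. apply Rle_ge, pow2_ge_0. }
    nra.
  - rewrite lsum_scal. specialize (H4 x). unfold Rdiv. rewrite Rmult_comm.
    apply Rmult_le_compat_r; auto. left; apply Rinv_0_lt_compat. apply pow_lt; auto.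
Qed.

Lemma pA a b p q : 0 <= a -> 0 <= b ->
  -((b^2*q - a^2*p)*(q-p)) <= -(1/2)*(a*b*(q-p)^2) + 3*((b-a)^2*(p^2+q^2)).
Proof. intros.
  pose proof (pow2_ge_0 ((b-a)*(p+q) + (a+b)*(q-p)/2)) as H1.
  pose proof (pow2_ge_0 ((b-a)*(p-q))) as H2.
  pose proof (pow2_ge_0 ((b-a)*(p+q))) as H3.
  pose proof (pow2_ge_0 ((b-a)*(p))) as H4.
  pose proof (pow2_ge_0 ((b-a)*(q))) as H5.
  nra. Qed.

Lemma edge_lip_bound {V} (G : wgraph V) rho (phi h : V -> R) r L : intrinsic_metric G rho -> 0 < r ->
  (forall x y, Rabs (phi x - phi y) <= rho x y / r) -> (forall x, 0 <= h x) ->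
  esum G L (fun x y => (phi y - phi x)^2 * h x) <= / r^2 * lsum (fun x => vm G x * h x) L.
Proof. intros HI Hr Hl Hh. unfold esum. rewrite <- lsum_scal. apply lsum_le. intros x _.
  rewrite (lsum_ext_in _ (fun y => h x * (ew G x y * (phi y - phi x)^2))) by (intros; ring).
  rewrite lsum_scal. pose proof (lip_sum G rho phi r x HI Hr Hl). pose proof (Hh x).
  unfold Rdiv in H. nra. Qed.

Lemma energyA {V} (G : wgraph V) rho (Phi v : V -> R) L r : intrinsic_metric G rho -> 0 < r -> NoDup L ->
  (forall x, 0 <= Phi x) -> (forall x y, Rabs (Phi x - Phi y) <= rho x y / r) ->
  (forall x, Phi x <> 0 -> In x L) -> (forall x y, adj G x y -> Phi x <> 0 -> In y L) ->
  2 * lsum (fun x => vm G x * (Phi x ^2 * v x) * laplacian G v x) L <=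
  - / 2 * esum G L (fun x y => Phi x * Phi y * (v y - v x)^2) + 6 / r^2 * lsum (fun x => vm G x * v x ^2) L.
Proof.
  intros HI Hr ND Hp Hl S1 S2.
  rewrite sbp; auto.
  2:{ intros x Hx. apply S1. intros E; apply Hx; rewrite E; ring. }
  2:{ intros x y A Hx. apply (S2 x y A). intros E; apply Hx; rewrite E; ring. }
  cbv beta.
  assert (S3 : forall x y, adj G x y -> Phi x <> Phi y -> In x L).
  { intros x y A Hne. destruct (Req_dec (Phi x) 0) as [E|E].
    - apply (S2 y x (adj_sym _ _ _ _ A)). intros E'. apply Hne. congruence.
    - apply S1; auto. }
  apply Rle_trans with (esum G L (fun x y => -(1/2)*(Phi x * Phi y * (v y - v x)^2) + 3*((Phi y - Phi x)^2*(v x^2 + v y^2)))).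
  { replace (2 * (- / 2 * esum G L (fun x y => (Phi y ^ 2 * v y - Phi x ^ 2 * v x) * (v y - v x))))
      with (-1 * esum G L (fun x y => (Phi y ^ 2 * v y - Phi x ^ 2 * v x) * (v y - v x))) by lra.
    rewrite <- esum_scal. apply esum_le. intros x y _. 
    pose proof (pA (Phi x) (Phi y) (v x) (v y) (Hp x) (Hp y)). nra. }
  rewrite esum_plus, !esum_scal.
  assert (E : esum G L (fun x y => (Phi y - Phi x) ^ 2 * (v x ^ 2 + v y ^ 2)) =
              2 * esum G L (fun x y => (Phi y - Phi x) ^ 2 * v x ^ 2)).
  { rewrite (esum_ext G L _ (fun x y => (Phi y - Phi x) ^ 2 * v x ^ 2 + (Phi y - Phi x) ^ 2 * v y ^ 2)) by (intros; ring).
    rewrite esum_plus. 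
    assert (esum G L (fun x y => (Phi y - Phi x) ^ 2 * v y ^ 2) = esum G L (fun x y => (Phi y - Phi x) ^ 2 * v x ^ 2)).
    { unfold esum. rewrite (edge_swap G (fun x y => (Phi y - Phi x) ^ 2 * v y ^ 2)); auto.
      apply lsum_ext_in; intros; apply lsum_ext_in; intros. f_equal. ring.
      intros x y A Hk. apply (S3 x y A). intros E. destruct Hk as [Hk|Hk]; apply Hk; rewrite E; ring. }
    lra. }
  rewrite E.
  pose proof (edge_lip_bound G rho Phi (fun x => v x ^2) r L HI Hr Hl (fun x => pow2_ge_0 (v x))).
  assert (0 < r^2) by (apply pow_lt; auto).
  replace (6 / r^2) with (6 * / r^2) by (unfold Rdiv; ring). nra.
Qed.

Lemma amgm r A B : 0 < r -> A * B <= r^2/8 * A^2 + 2/r^2 * B^2.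
Proof. intros Hr. pose proof (pow2_ge_0 (r^2 * A / 2 - 2*B)).
  assert (0 < r^2) by (apply pow_lt; auto).
  apply Rmult_le_reg_l with (r^2); auto.
  replace (r ^ 2 * (r ^ 2 / 8 * A ^ 2 + 2 / r ^ 2 * B ^ 2)) with (r^4/8*A^2 + 2*B^2) by (field; lra).
  nra. Qed.

Lemma pB r d X Y P : 0 < r -> (d <> 0 -> P = 1) -> 0 <= P ->
  Rabs (d*X*Y) <= r^2/8 * (d^2*X^2) + 2/r^2 * (P*Y^2).
Proof. intros Hr HP HP0. assert (0 < r^2) by (apply pow_lt; auto).
  assert (0 <= 2/r^2) by (unfold Rdiv; apply Rmult_le_pos; [lra| left; apply Rinv_0_lt_compat; auto]).
  destruct (Req_dec d 0) as [E|E].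
  - subst. rewrite !Rmult_0_l, Rabs_R0. pose proof (pow2_ge_0 Y). pose proof (pow2_ge_0 X). 
    assert (0 <= 2/r^2 * (P*Y^2)) by (apply Rmult_le_pos; auto; apply Rmult_le_pos; auto).
    replace (r ^ 2 / 8 * (0 ^ 2 * X ^ 2)) with 0 by ring. lra.
  - rewrite HP by auto. rewrite Rmult_1_l. rewrite Rabs_mult.
    pose proof (amgm r (Rabs (d*X)) (Rabs Y) Hr).
    replace (Rabs (d*X) ^2) with ((d*X)^2) in H1 by (rewrite RPow_abs; rewrite Rabs_right; auto; apply Rle_ge, pow2_ge_0).
    replace (Rabs Y ^2) with (Y^2) in H1 by (rewrite RPow_abs; rewrite Rabs_right; auto; apply Rle_ge, pow2_ge_0).
    replace (d^2 * X^2) with ((d*X)^2) by ring. lra.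
Qed.

Lemma energyB {V} (G : wgraph V) rho (phi Phi v : V -> R) L r : intrinsic_metric G rho -> 0 < r -> NoDup L ->
  (forall x, 0 <= phi x) -> (forall x y, Rabs (phi x - phi y) <= rho x y / r) ->
  (forall x, phi x <> 0 -> In x L) -> (forall x y, adj G x y -> phi x <> 0 -> In y L) ->
  (forall x y, adj G x y -> phi x <> phi y -> Phi x = 1 /\ Phi y = 1) -> (forall x, 0 <= Phi x) ->
  lsum (fun x => vm G x * phi x ^2 * (laplacian G v x)^2) L <=
  - / 3 * esum G L (fun x y => phi x * phi y * (2 * ((v y - v x) * (laplacian G v y - laplacian G v x))))
  + 2 / r^2 * esum G L (fun x y => Phi x * Phi y * (v y - v x)^2).
Proof.
  intros HI Hr ND Hp Hl S1 S2 HPhi HP0.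
  set (Sw := lsum (fun x => vm G x * phi x ^2 * (laplacian G v x)^2) L).
  set (Dd := esum G L (fun x y => phi x * phi y * (2 * ((v y - v x) * (laplacian G v y - laplacian G v x))))).
  set (DP := esum G L (fun x y => Phi x * Phi y * (v y - v x)^2)).
  assert (DP0 : 0 <= DP). { apply esum_nonneg. intros. pose proof (Hp x). pose proof (HP0 x). pose proof (HP0 y).
     pose proof (pow2_ge_0 (v y - v x)). apply Rmult_le_pos; auto. apply Rmult_le_pos; auto. }
  assert (E1 : Sw = -/2 * esum G L (fun x y => (phi y ^2 * laplacian G v y - phi x^2 * laplacian G v x) * (v y - v x))).
  { unfold Sw. rewrite <- (sbp G (fun x => phi x ^2 * laplacian G v x) v L); auto.
    apply lsum_ext_in. intros. ring.
    intros x Hx. apply S1. intros E; apply Hx; rewrite E; ring.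
    intros x y A Hx. apply (S2 x y A). intros E; apply Hx; rewrite E; ring. }
  assert (E2 : esum G L (fun x y => (phi y ^2 * laplacian G v y - phi x^2 * laplacian G v x) * (v y - v x)) =
     / 2 * Dd + esum G L (fun x y => (phi y - phi x) * (phi y * laplacian G v y + phi x * laplacian G v x) * (v y - v x))).
  { unfold Dd. rewrite <- esum_scal, <- esum_plus. apply esum_ext. intros. field. }
  assert (E3 : esum G L (fun x y => (phi y - phi x)^2 * (phi y * laplacian G v y + phi x * laplacian G v x)^2) <= 4 / r^2 * Sw).
  { apply Rle_trans with (esum G L (fun x y => 2 * ((phi y - phi x)^2 * (phi x^2 * laplacian G v x^2)) + 2 * ((phi y - phi x)^2 * (phi y^2 * laplacian G v y^2)))).
    { apply esum_le. intros x y _. pose proof (pow2_ge_0 (phi y - phi x)). 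
      pose proof (pow2_ge_0 (phi y * laplacian G v y - phi x * laplacian G v x)). nra. }
    rewrite esum_plus, !esum_scal.
    assert (esum G L (fun x y => (phi y - phi x)^2 * (phi y^2 * laplacian G v y^2)) = esum G L (fun x y => (phi y - phi x)^2 * (phi x^2 * laplacian G v x^2))).
    { unfold esum. rewrite (edge_swap G (fun x y => (phi y - phi x)^2 * (phi y^2 * laplacian G v y^2))); auto.
      apply lsum_ext_in; intros; apply lsum_ext_in; intros. f_equal. ring.
      intros x y A Hk. destruct (Req_dec (phi x) 0) as [E|E].
      - apply (S2 y x (adj_sym _ _ _ _ A)). intros E'. destruct Hk as [Hk|Hk]; apply Hk; rewrite E, E'; ring.
      - apply S1; auto. }
    rewrite H. pose proof (edge_lip_bound G rho phi (fun x => phi x ^2 * laplacian G v x ^2) r L HI Hr Hl).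
    assert (Sw = lsum (fun x => vm G x * (phi x ^ 2 * laplacian G v x ^ 2)) L). { unfold Sw. apply lsum_ext_in; intros; ring. }
    rewrite H1. replace (4 / r^2) with (4 * / r^2) by (unfold Rdiv; ring).
    assert (esum G L (fun x y => (phi y - phi x) ^ 2 * (phi x ^ 2 * laplacian G v x ^ 2)) <= / r ^ 2 * lsum (fun x => vm G x * (phi x ^ 2 * laplacian G v x ^ 2)) L).
    { apply H0. intros. pose proof (pow2_ge_0 (phi x)). pose proof (pow2_ge_0 (laplacian G v x)). nra. }
    lra. }
  assert (E4 : - esum G L (fun x y => (phi y - phi x) * (phi y * laplacian G v y + phi x * laplacian G v x) * (v y - v x)) <=
     r^2/8 * esum G L (fun x y => (phi y - phi x)^2 * (phi y * laplacian G v y + phi x * laplacian G v x)^2) + 2/r^2 * DP).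
  { unfold DP. rewrite <- !esum_scal, <- esum_plus. rewrite <- (Rmult_1_l (esum _ _ _)).
    replace (- (1 * esum G L (fun x y => (phi y - phi x) * (phi y * laplacian G v y + phi x * laplacian G v x) * (v y - v x)))) with
      (-1 * esum G L (fun x y => (phi y - phi x) * (phi y * laplacian G v y + phi x * laplacian G v x) * (v y - v x))) by ring.
    rewrite <- esum_scal. apply esum_le. intros x y A.
    pose proof (pB r (phi y - phi x) (phi y * laplacian G v y + phi x * laplacian G v x) (v y - v x) (Phi x * Phi y) Hr).
    assert (Rabs ((phi y - phi x) * (phi y * laplacian G v y + phi x * laplacian G v x) * (v y - v x)) <=
       r ^ 2 / 8 * ((phi y - phi x) ^ 2 * (phi y * laplacian G v y + phi x * laplacian G v x) ^ 2) + 2 / r ^ 2 * (Phi x * Phi y * (v y - v x) ^ 2)).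
    { apply H. - intros Hd. assert (phi x <> phi y) by (intros E; apply Hd; rewrite E; ring).
        destruct (HPhi x y A H0) as [-> ->]. ring. - apply Rmult_le_pos; auto. }
    pose proof (Rabs_maj2 ((phi y - phi x) * (phi y * laplacian G v y + phi x * laplacian G v x) * (v y - v x))). lra. }
  assert (0 < r^2) by (apply pow_lt; auto).
  set (X := esum G L (fun x y => (phi y - phi x) * (phi y * laplacian G v y + phi x * laplacian G v x) * (v y - v x))) in *.
  set (Y := esum G L (fun x y => (phi y - phi x)^2 * (phi y * laplacian G v y + phi x * laplacian G v x)^2)) in *.
  assert (HY : r^2/8 * Y <= /2 * Sw).
  { replace (/2 * Sw) with (r^2/8 * (4/r^2 * Sw)) by (field; lra). apply Rmult_le_compat_l; auto.
    unfold Rdiv; apply Rmult_le_pos; [left; auto| lra]. }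
  assert (HD : 0 <= / r^2 * DP) by (apply Rmult_le_pos; auto; left; apply Rinv_0_lt_compat; auto).
  replace (2 / r^2 * DP) with (2 * (/ r^2 * DP)) in * by (unfold Rdiv; ring).
  rewrite E2 in E1. change (Sw <= - / 3 * Dd + 2 * (/ r ^ 2 * DP)).
  set (rY := r^2/8*Y) in *. set (iD := / r^2 * DP) in *. lra.
Qed.


Lemma dR_plus (f g : R -> R) (x df dg : R) : is_derive f x df -> is_derive g x dg -> is_derive (fun t => f t + g t) x (df + dg).
Proof. intros. apply (is_derive_plus f g x df dg); auto. Qed.
Lemma dR_minus (f g : R -> R) (x df dg : R) : is_derive f x df -> is_derive g x dg -> is_derive (fun t => f t - g t) x (df - dg).
Proof. intros. apply (is_derive_minus f g x df dg); auto. Qed.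
Lemma dR_mult (f g : R -> R) (x df dg : R) : is_derive f x df -> is_derive g x dg -> is_derive (fun t => f t * g t) x (df * g x + f x * dg).
Proof. intros. apply (is_derive_mult f g x df dg); auto. intros; apply Rmult_comm. Qed.
Lemma dR_const (c : R) (x : R) : is_derive (fun _ => c) x 0.
Proof. apply (is_derive_const c x). Qed.
Lemma dR_scal (c : R) (f : R -> R) (x df : R) : is_derive f x df -> is_derive (fun t => c * f t) x (c * df).
Proof. apply is_derive_scal. Qed.

Lemma cR_plus (f g : R -> R) (x : R) : continuous f x -> continuous g x -> continuous (fun t => f t + g t) x.
Proof. intros. apply (continuous_plus f g x); auto. Qed.
Lemma cR_minus (f g : R -> R) (x : R) : continuous f x -> continuous g x -> continuous (fun t => f t - g t) x.
Proof. intros. apply (continuous_minus f g x); auto. Qed.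
Lemma cR_mult (f g : R -> R) (x : R) : continuous f x -> continuous g x -> continuous (fun t => f t * g t) x.
Proof. intros. apply (continuous_mult f g x); auto. Qed.
Lemma cR_const (c : R) (x : R) : continuous (fun _ => c) x.
Proof. apply continuous_const. Qed.

Lemma d_lsum {A} (F F' : A -> R -> R) l t : (forall y, In y l -> is_derive (F y) t (F' y t)) ->
  is_derive (fun t => lsum (fun y => F y t) l) t (lsum (fun y => F' y t) l).
Proof. induction l; intros H; simpl. apply dR_const. apply dR_plus; auto. apply H; simpl; auto.
  apply IHl. intros; apply H; simpl; auto. Qed.

Lemma c_lsum {A} (F : A -> R -> R) l t : (forall y, In y l -> continuous (F y) t) ->
  continuous (fun t => lsum (fun y => F y t) l) t.
Proof. induction l; intros H; simpl. apply cR_const. apply cR_plus; auto. apply H; simpl; auto.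
  apply IHl. intros; apply H; simpl; auto. Qed.

Lemma c_nsum (F : nat -> R -> R) n t : (forall i, (i < n)%nat -> continuous (F i) t) ->
  continuous (fun t => nsum n (fun i => F i t)) t.
Proof. induction n; intros H; simpl. apply cR_const. apply cR_plus; auto. Qed.

Lemma d_nsum (F F' : nat -> R -> R) n t : (forall i, (i < n)%nat -> is_derive (F i) t (F' i t)) ->
  is_derive (fun t => nsum n (fun i => F i t)) t (nsum n (fun i => F' i t)).
Proof. induction n; intros H; simpl. apply dR_const. apply dR_plus; auto. Qed.

Lemma c_lap {V} (G : wgraph V) (v : V -> R -> R) x t : (forall y, continuous (v y) t) ->
  continuous (fun t => laplacian G (fun y => v y t) x) t.
Proof. intros H. unfold laplacian. apply (c_lsum (fun y t => ew G x y / vm G x * (v y t - v x t))).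
  intros. apply cR_mult. apply cR_const. apply cR_minus; auto. Qed.

Lemma c_lapn {V} (G : wgraph V) n (v : V -> R -> R) x t : (forall y, continuous (v y) t) ->
  continuous (fun t => lapn G n (fun y => v y t) x) t.
Proof. revert x. induction n; intros x H; simpl. auto.
  apply (c_lap G (fun y t => lapn G n (fun y0 => v y0 t) y)). intros; apply IHn; auto. Qed.

Lemma d_lap {V} (G : wgraph V) (v v' : V -> R -> R) x t : (forall y, is_derive (v y) t (v' y t)) ->
  is_derive (fun t => laplacian G (fun y => v y t) x) t (laplacian G (fun y => v' y t) x).
Proof. intros H. unfold laplacian. apply (d_lsum (fun y t => ew G x y / vm G x * (v y t - v x t)) (fun y t => ew G x y / vm G x * (v' y t - v' x t))).
  intros. apply dR_scal. apply dR_minus; auto. Qed.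

Lemma d_lapn {V} (G : wgraph V) n (v v' : V -> R -> R) x t : (forall y, is_derive (v y) t (v' y t)) ->
  is_derive (fun t => lapn G n (fun y => v y t) x) t (lapn G n (fun y => v' y t) x).
Proof. revert x. induction n; intros x H; simpl. auto.
  apply (d_lap G (fun y t => lapn G n (fun y0 => v y0 t) y) (fun y t => lapn G n (fun y0 => v' y0 t) y)). intros; apply IHn; auto. Qed.

Lemma d_cont (f : R -> R) (t l : R) : is_derive f t l -> continuous f t.
Proof. intros H. apply (ex_derive_continuous (K := R_AbsRing) (V := R_NormedModule)). exists l; auto. Qed.

Lemma exRI (g : R -> R) (a b : R) : a <= b -> (forall t, a <= t <= b -> continuous g t) -> ex_RInt g a b.
Proof. intros Hab Hc. apply (ex_RInt_continuous (V := R_CompleteNormedModule)). intros z Hz. apply Hc.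
  rewrite Rmin_left, Rmax_right in Hz; lra. Qed.

Lemma good_time (g : R -> R) (a b : R) : a < b -> (forall t, a <= t <= b -> continuous g t) ->
  exists t, a <= t <= b /\ g t * (b - a) <= RInt g a b.
Proof. intros Hab Hc.
  destruct (continuity_ab_min g a b (Rlt_le _ _ Hab)) as [m [Hm Hmab]].
  { intros c Hc'. apply continuity_pt_filterlim. apply Hc; auto. }
  exists m. split; auto. rewrite <- (Rmult_comm (b - a)).
  replace ((b - a) * g m) with (RInt (fun _ => g m) a b) by (rewrite RInt_const; reflexivity).
  apply RInt_le. lra. apply ex_RInt_const. apply exRI; auto; lra.
  intros; apply Hm; lra. Qed.

Lemma RInt_nonneg (g : R -> R) (a b : R) : a <= b -> (forall t, a <= t <= b -> continuous g t) -> (forall t, a <= t <= b -> 0 <= g t) -> 0 <= RInt g a b.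
Proof. intros. apply RInt_ge_0; auto. apply exRI; auto. intros; apply H1; lra. Qed.

Lemma RInt_mono_int (g : R -> R) (a a' b : R) : a <= a' -> a' <= b -> (forall t, a <= t <= b -> continuous g t) -> (forall t, a <= t <= b -> 0 <= g t) ->
  RInt g a' b <= RInt g a b.
Proof. intros. rewrite <- (RInt_Chasles g a a' b). 
  assert (0 <= RInt g a a'). { apply RInt_nonneg; auto; intros; [apply H1|apply H2]; lra. }
  simpl. unfold plus; simpl. lra. apply exRI; auto; intros; apply H1; lra. apply exRI; auto; intros; apply H1; lra. Qed.

Lemma RInt_mono_int_r (g : R -> R) (a b b' : R) : a <= b' -> b' <= b -> (forall t, a <= t <= b -> continuous g t) -> (forall t, a <= t <= b -> 0 <= g t) ->
  RInt g a b' <= RInt g a b.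
Proof. intros. rewrite <- (RInt_Chasles g a b' b). 
  assert (0 <= RInt g b' b). { apply RInt_nonneg; auto; intros; [apply H1|apply H2]; lra. }
  simpl. unfold plus; simpl. lra. apply exRI; auto; intros; apply H1; lra. apply exRI; auto; intros; apply H1; lra. Qed.

Lemma RInt_le' (f g : R -> R) (a b : R) : a <= b -> (forall t, a <= t <= b -> continuous f t) -> (forall t, a <= t <= b -> continuous g t) ->
  (forall t, a <= t <= b -> f t <= g t) -> RInt f a b <= RInt g a b.
Proof. intros. apply RInt_le; auto. apply exRI; auto. apply exRI; auto. intros; apply H2; lra. Qed.

Lemma RInt_lin (f g : R -> R) (a b c d : R) : a <= b -> (forall t, a <= t <= b -> continuous f t) -> (forall t, a <= t <= b -> continuous g t) ->
  RInt (fun t => c * f t + d * g t) a b = c * RInt f a b + d * RInt g a b.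
Proof. intros. rewrite (RInt_plus (fun t => c * f t) (fun t => d * g t)).
  rewrite (RInt_scal f), (RInt_scal g). reflexivity.
  apply exRI; auto. apply exRI; auto.
  apply (ex_RInt_scal f). apply exRI; auto. apply (ex_RInt_scal g). apply exRI; auto. Qed.

Lemma FTC (f df : R -> R) (a b : R) : a <= b -> (forall t, a <= t <= b -> is_derive f t (df t)) -> (forall t, a <= t <= b -> continuous df t) ->
  RInt df a b = f b - f a.
Proof. intros. apply is_RInt_unique. apply (is_RInt_derive f df a b).
  intros; apply H0; rewrite Rmin_left, Rmax_right in H2; lra.
  intros; apply H1; rewrite Rmin_left, Rmax_right in H2; lra. Qed.

Lemma RInt_zero_pt (g : R -> R) (a b t : R) : a < b -> (forall t, a <= t <= b -> continuous g t) -> (forall t, a <= t <= b -> 0 <= g t) ->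
  RInt g a b <= 0 -> a < t < b -> g t = 0.
Proof. intros Hab Hc Hp Hi Ht. destruct (Rle_lt_or_eq_dec 0 (g t)) as [Hlt|]; [apply Hp; lra| |auto].
  exfalso. 
  assert (Hcont := Hc t (conj (Rlt_le _ _ (proj1 Ht)) (Rlt_le _ _ (proj2 Ht)))).
  assert (exists d, 0 < d /\ forall s, Rabs (s - t) < d -> g t / 2 < g s).
  { apply continuity_pt_filterlim in Hcont. unfold continuity_pt, continue_in, limit1_in, limit_in in Hcont.
    destruct (Hcont (g t / 2)) as [d [Hd Hd']]. lra.
    exists d. split. lra. intros s Hs. destruct (Req_dec s t) as [->|Hne]. lra.
    assert (D_x no_cond t s /\ dist R_met s t < d). { split. split. exact I. auto. simpl. unfold R_dist. auto. }
    specialize (Hd' s H). simpl in Hd'. unfold R_dist in Hd'.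
    apply Rabs_def2 in Hd'. lra. }
  destruct H as [d [Hd Hs]].
  set (c := Rmax a (t - d/2)). set (e := Rmin b (t + d/2)).
  assert (a <= c /\ c < t /\ t < e /\ e <= b) by (unfold c, e, Rmax, Rmin; repeat destruct Rle_dec; lra).
  assert (0 < RInt g c e).
  { apply RInt_gt_0. lra. intros x Hx. assert (Rabs (x - t) < d). { unfold c, e, Rmax, Rmin in *; repeat destruct Rle_dec; apply Rabs_def1; lra. }
    specialize (Hs x H0). lra. intros; apply Hc; lra. }
  assert (RInt g c e <= RInt g a b).
  { eapply Rle_trans. apply (RInt_mono_int_r g c b e); try lra. intros; apply Hc; lra. intros; apply Hp; lra.
    apply RInt_mono_int; try lra; auto. }
  lra.
Qed.


Lemma d_sq (f : R -> R) t l : is_derive f t l -> is_derive (fun t => f t ^ 2) t (2 * f t * l).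
Proof. intros H. apply (is_derive_ext (fun t => f t * f t)). intros t0; change (f t0 * f t0 = f t0 ^ 2); ring.
  replace (2 * f t * l) with (l * f t + f t * l) by ring. apply dR_mult; auto. Qed.

Lemma c_sq (f : R -> R) t : continuous f t -> continuous (fun t => f t ^ 2) t.
Proof. intros H. apply (continuous_ext (fun t => f t * f t)). intros t0; change (f t0 * f t0 = f t0 ^ 2); ring. apply cR_mult; auto. Qed.

Lemma c_esum {V} (G : wgraph V) L (F : V -> V -> R -> R) t : (forall x y, continuous (F x y) t) ->
  continuous (fun t => esum G L (fun x y => F x y t)) t.
Proof. intros H. unfold esum. apply (c_lsum (fun x t => lsum (fun y => ew G x y * F x y t) (nbrs G x))).
  intros x _. apply (c_lsum (fun y t => ew G x y * F x y t)). intros. apply cR_mult. apply cR_const. auto. Qed.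

Lemma d_esum {V} (G : wgraph V) L (F F' : V -> V -> R -> R) t : (forall x y, is_derive (F x y) t (F' x y t)) ->
  is_derive (fun t => esum G L (fun x y => F x y t)) t (esum G L (fun x y => F' x y t)).
Proof. intros H. unfold esum. apply (d_lsum (fun x t => lsum (fun y => ew G x y * F x y t) (nbrs G x))
  (fun x t => lsum (fun y => ew G x y * F' x y t) (nbrs G x))).
  intros x _. apply (d_lsum (fun y t => ew G x y * F x y t) (fun y t => ew G x y * F' x y t)). intros. apply dR_scal. auto. Qed.

Definition Sq {V} (G : wgraph V) (L : list V) (v : V -> R -> R) (t : R) : R := lsum (fun x => vm G x * v x t ^ 2) L.
Definition Dq {V} (G : wgraph V) (L : list V) (Phi : V -> R) (v : V -> R -> R) (t : R) : R :=
  esum G L (fun x y => Phi x * Phi y * (v y t - v x t)^2).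

Lemma Sq_cont {V} (G : wgraph V) L v t : (forall x, continuous (v x) t) -> continuous (Sq G L v) t.
Proof. intros H. unfold Sq. apply (c_lsum (fun x t => vm G x * v x t ^ 2)). intros.
  apply cR_mult. apply cR_const. apply c_sq; auto. Qed.

Lemma Dq_cont {V} (G : wgraph V) L Phi v t : (forall x, continuous (v x) t) -> continuous (Dq G L Phi v) t.
Proof. intros H. unfold Dq. apply (c_esum G L (fun x y t => Phi x * Phi y * (v y t - v x t)^2)). intros.
  apply cR_mult. apply cR_const. apply c_sq. apply cR_minus; auto. Qed.

Lemma Sq_nonneg {V} (G : wgraph V) L v t : 0 <= Sq G L v t.
Proof. unfold Sq. apply lsum_nonneg. intros. apply Rmult_le_pos. left; apply vm_pos. apply pow2_ge_0. Qed.

Lemma Dq_nonneg {V} (G : wgraph V) L Phi v t : (forall x, 0 <= Phi x) -> 0 <= Dq G L Phi v t.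
Proof. intros H. unfold Dq. apply esum_nonneg. intros. apply Rmult_le_pos. apply Rmult_le_pos; auto. apply pow2_ge_0. Qed.

Lemma intA {V} (G : wgraph V) rho (Phi : V -> R) (v : V -> R -> R) L r a b :
  intrinsic_metric G rho -> 0 < r -> NoDup L ->
  (forall x, 0 <= Phi x <= 1) -> (forall x y, Rabs (Phi x - Phi y) <= rho x y / r) ->
  (forall x, Phi x <> 0 -> In x L) -> (forall x y, adj G x y -> Phi x <> 0 -> In y L) -> a <= b ->
  (forall x t, a <= t <= b -> is_derive (v x) t (laplacian G (fun y => v y t) x)) ->
  RInt (Dq G L Phi v) a b <= 2 * Sq G L v a + 12 / r^2 * RInt (Sq G L v) a b.
Proof.
  intros HI Hr ND Hp Hl S1 S2 Hab Hd.
  assert (Hc : forall x t, a <= t <= b -> continuous (v x) t) by (intros; eapply d_cont; apply Hd; auto).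
  set (E := fun t => lsum (fun x => vm G x * (Phi x ^ 2 * v x t ^ 2)) L).
  set (E' := fun t => lsum (fun x => vm G x * (Phi x ^ 2 * (2 * v x t * laplacian G (fun y => v y t) x))) L).
  assert (HE : forall t, a <= t <= b -> is_derive E t (E' t)).
  { intros t Ht. unfold E, E'. apply (d_lsum (fun x t => vm G x * (Phi x ^ 2 * v x t ^ 2))
       (fun x t => vm G x * (Phi x ^ 2 * (2 * v x t * laplacian G (fun y => v y t) x)))).
    intros. apply dR_scal. apply dR_scal. apply d_sq. apply Hd; auto. }
  assert (HE'c : forall t, a <= t <= b -> continuous E' t).
  { intros t Ht. unfold E'. apply (c_lsum (fun x t => vm G x * (Phi x ^ 2 * (2 * v x t * laplacian G (fun y => v y t) x)))).
    intros. apply cR_mult. apply cR_const. apply cR_mult. apply cR_const. apply cR_mult. apply cR_mult. apply cR_const. apply Hc; auto.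
    apply c_lap. intros; apply Hc; auto. }
  assert (Hbound : forall t, a <= t <= b -> E' t <= -/2 * Dq G L Phi v t + 6 / r^2 * Sq G L v t).
  { intros t Ht. pose proof (energyA G rho Phi (fun y => v y t) L r HI Hr ND (fun x => proj1 (Hp x)) Hl S1 S2).
    unfold Dq, Sq. replace (E' t) with (2 * lsum (fun x => vm G x * (Phi x ^ 2 * v x t) * laplacian G (fun y => v y t) x) L).
    exact H. unfold E'. rewrite <- lsum_scal. apply lsum_ext_in. intros; ring. }
  assert (Hint : RInt E' a b <= -/2 * RInt (Dq G L Phi v) a b + 6 / r^2 * RInt (Sq G L v) a b).
  { rewrite <- RInt_lin; auto. apply RInt_le'; auto. 
    intros. apply cR_plus; apply cR_mult; try apply cR_const. apply Dq_cont; intros; apply Hc; auto. apply Sq_cont; intros; apply Hc; auto.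
    intros; apply Dq_cont; intros; apply Hc; auto. intros; apply Sq_cont; intros; apply Hc; auto. }
  rewrite (FTC E E' a b Hab HE HE'c) in Hint.
  assert (0 <= E b). { unfold E. apply lsum_nonneg. intros. apply Rmult_le_pos. left; apply vm_pos. 
     apply Rmult_le_pos; apply pow2_ge_0. }
  assert (E a <= Sq G L v a). { unfold E, Sq. apply lsum_le. intros. apply Rmult_le_compat_l. left; apply vm_pos.
     destruct (Hp x). assert (Phi x ^2 <= 1) by nra. pose proof (pow2_ge_0 (v x a)). nra. }
  lra.
Qed.

Lemma intB {V} (G : wgraph V) rho (phi Phi : V -> R) (v : V -> R -> R) L r a b :
  intrinsic_metric G rho -> 0 < r -> NoDup L ->
  (forall x, 0 <= phi x) -> (forall x y, Rabs (phi x - phi y) <= rho x y / r) ->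
  (forall x, phi x <> 0 -> In x L) -> (forall x y, adj G x y -> phi x <> 0 -> In y L) ->
  (forall x y, adj G x y -> phi x <> phi y -> Phi x = 1 /\ Phi y = 1) -> (forall x, 0 <= Phi x) -> a <= b ->
  (forall x t, a <= t <= b -> is_derive (v x) t (laplacian G (fun y => v y t) x)) ->
  RInt (fun t => lsum (fun x => vm G x * phi x ^ 2 * (laplacian G (fun y => v y t) x) ^ 2) L) a b <=
  / 3 * Dq G L phi v a + 2 / r^2 * RInt (Dq G L Phi v) a b.
Proof.
  intros HI Hr ND Hp Hl S1 S2 HP HP0 Hab Hd.
  assert (Hc : forall x t, a <= t <= b -> continuous (v x) t) by (intros; eapply d_cont; apply Hd; auto).
  set (w := fun x t => laplacian G (fun y => v y t) x).
  assert (Hwc : forall x t, a <= t <= b -> continuous (w x) t) by (intros; apply c_lap; intros; apply Hc; auto).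
  set (Dd := fun t => esum G L (fun x y => phi x * phi y * (2 * ((v y t - v x t) * (w y t - w x t))))).
  assert (HD : forall t, a <= t <= b -> is_derive (Dq G L phi v) t (Dd t)).
  { intros t Ht. unfold Dq, Dd. apply (d_esum G L (fun x y t => phi x * phi y * (v y t - v x t)^2)
      (fun x y t => phi x * phi y * (2 * ((v y t - v x t) * (w y t - w x t))))).
    intros. apply dR_scal. replace (2 * ((v y t - v x t) * (w y t - w x t))) with (2 * (v y t - v x t) * (w y t - w x t)) by ring.
    apply (d_sq (fun t => v y t - v x t)). apply dR_minus; apply Hd; auto. }
  assert (HDc : forall t, a <= t <= b -> continuous Dd t).
  { intros t Ht. unfold Dd. apply (c_esum G L (fun x y t => phi x * phi y * (2 * ((v y t - v x t) * (w y t - w x t))))).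
    intros. apply cR_mult. apply cR_const. apply cR_mult. apply cR_const. apply cR_mult; apply cR_minus; auto. }
  set (Sw := fun t => lsum (fun x => vm G x * phi x ^ 2 * (laplacian G (fun y => v y t) x) ^ 2) L).
  assert (HSwc : forall t, a <= t <= b -> continuous Sw t).
  { intros t Ht. unfold Sw. apply (c_lsum (fun x t => vm G x * phi x ^ 2 * (laplacian G (fun y => v y t) x) ^ 2)).
    intros. apply cR_mult. apply cR_const. apply c_sq. apply Hwc; auto. }
  assert (Hbound : forall t, a <= t <= b -> Sw t <= -/3 * Dd t + 2 / r^2 * Dq G L Phi v t).
  { intros t Ht. apply (energyB G rho phi Phi (fun y => v y t) L r); auto. }
  assert (Hint : RInt Sw a b <= -/3 * RInt Dd a b + 2 / r^2 * RInt (Dq G L Phi v) a b).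
  { rewrite <- RInt_lin; auto. apply RInt_le'; auto. 
    intros. apply cR_plus; apply cR_mult; try apply cR_const. auto. apply Dq_cont; intros; apply Hc; auto.
    intros; apply Dq_cont; intros; apply Hc; auto. }
  rewrite (FTC (Dq G L phi v) Dd a b Hab HD HDc) in Hint.
  pose proof (Dq_nonneg G L phi v b Hp). fold Sw. lra.
Qed.


Definition ball_lists {V} (rho : V -> V -> R) (x0 : V) (BL : R -> list V) : Prop :=
  forall r, 0 < r -> NoDup (BL r) /\ forall y, In y (BL r) <-> rho y x0 <= r.

Lemma cut_nz {V} rho (x0 : V) r x : 0 < r -> cutf rho x0 r x <> 0 -> rho x x0 < 2 * r.
Proof. intros Hr H. destruct (Rlt_le_dec (rho x x0) (2*r)); auto. exfalso; apply H. apply cut_zero; auto. Qed.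

Lemma step {V} (G : wgraph V) rho s x0 BL (v : V -> R -> R) r A T1 :
  intrinsic_metric G rho -> 1 <= s -> (forall x y, adj G x y -> rho x y <= s) -> ball_lists rho x0 BL ->
  s <= r -> A <= T1 ->
  (forall x t, A - 2 * r^2 <= t <= T1 -> is_derive (v x) t (laplacian G (fun y => v y t) x)) ->
  RInt (Sq G (BL r) (fun x t => laplacian G (fun y => v y t) x)) A T1 <=
  42 / r^4 * RInt (Sq G (BL (7 * r)) v) (A - 2 * r^2) T1.
Proof.
  intros HI Hs Hj HBL Hsr HAT Hd.
  assert (Hr : 0 < r) by lra.
  assert (Hr2 : 0 < r^2) by (apply pow_lt; lra).
  pose proof HI as [Hn [Hz [Hsym [Htri Hint]]]].
  set (L := BL (7 * r)).
  destruct (HBL (7*r)) as [NDL HL]; [lra|]. fold L in NDL, HL.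
  destruct (HBL r) as [NDr Hrl]; [lra|].
  set (phi := cutf rho x0 r). set (r' := 2 * r + s). set (Phi := cutf rho x0 r').
  assert (Hr' : 0 < r') by (unfold r'; lra).
  assert (Hc : forall x t, A - 2 * r^2 <= t <= T1 -> continuous (v x) t) by (intros; eapply d_cont; apply Hd; auto).
  set (w := fun x t => laplacian G (fun y => v y t) x).
  assert (Hwc : forall x t, A - 2 * r^2 <= t <= T1 -> continuous (w x) t) by (intros; apply c_lap; intros; apply Hc; auto).
  assert (trin : forall x y, adj G x y -> rho y x0 <= s + rho x x0).
  { intros x y A'. pose proof (Htri y x x0). rewrite (Hsym y x) in H. pose proof (Hj x y A'). lra. }
  assert (Hphi0 : forall x, 0 <= phi x) by (intros; apply cut_bounds).
  assert (HPhi01 : forall x, 0 <= Phi x <= 1) by (intros; apply cut_bounds).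
  assert (Hphil : forall x y, Rabs (phi x - phi y) <= rho x y / r) by (intros; apply (cut_lip G); auto).
  assert (HPhil : forall x y, Rabs (Phi x - Phi y) <= rho x y / r') by (intros; apply (cut_lip G); auto).
  assert (Sphi1 : forall x, phi x <> 0 -> In x L).
  { intros x H. apply HL. pose proof (cut_nz rho x0 r x Hr H). lra. }
  assert (Sphi2 : forall x y, adj G x y -> phi x <> 0 -> In y L).
  { intros x y A' H. apply HL. pose proof (cut_nz rho x0 r x Hr H). pose proof (trin x y A'). lra. }
  assert (SPhi1 : forall x, Phi x <> 0 -> In x L).
  { intros x H. apply HL. pose proof (cut_nz rho x0 r' x Hr' H). unfold r' in *. lra. }
  assert (SPhi2 : forall x y, adj G x y -> Phi x <> 0 -> In y L).
  { intros x y A' H. apply HL. pose proof (cut_nz rho x0 r' x Hr' H). pose proof (trin x y A'). unfold r' in *. lra. }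
  assert (HphiPhi : forall x y, adj G x y -> phi x <> phi y -> Phi x = 1 /\ Phi y = 1).
  { intros x y A' Hne. 
    assert (rho x x0 <= 2*r + s /\ rho y x0 <= 2*r + s).
    { destruct (Req_dec (phi x) 0) as [E|E].
      - assert (phi y <> 0) by (intros E'; apply Hne; congruence).
        pose proof (cut_nz rho x0 r y Hr H). pose proof (trin y x (adj_sym _ _ _ _ A')). lra.
      - pose proof (cut_nz rho x0 r x Hr E). pose proof (trin x y A'). lra. }
    split; apply cut_one; unfold r'; lra. }
  assert (Hle : forall x, phi x <= Phi x).
  { intros x. destruct (Req_dec (phi x) 0) as [E|E]. rewrite E. apply HPhi01.
    pose proof (cut_nz rho x0 r x Hr E). unfold Phi. rewrite cut_one. apply cut_bounds. auto. unfold r'; lra. }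
  set (DP := Dq G L Phi v). set (SL := Sq G L v).
  assert (HDPc : forall t, A - 2*r^2 <= t <= T1 -> continuous DP t) by (intros; apply Dq_cont; intros; apply Hc; auto).
  assert (HSLc : forall t, A - 2*r^2 <= t <= T1 -> continuous SL t) by (intros; apply Sq_cont; intros; apply Hc; auto).
  assert (HDP0 : forall t, 0 <= DP t) by (intros; apply Dq_nonneg; intros; apply HPhi01).
  assert (HSL0 : forall t, 0 <= SL t) by (intros; apply Sq_nonneg).
  destruct (good_time DP (A - r^2) A) as [a [Ha Hga]]. lra. intros; apply HDPc; lra.
  destruct (good_time SL (A - 2*r^2) (A - r^2)) as [a' [Ha' Hga']]. lra. intros; apply HSLc; lra.
  set (Sw := fun t => lsum (fun x => vm G x * phi x ^ 2 * (laplacian G (fun y => v y t) x) ^ 2) L).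
  assert (HSwc : forall t, A - 2*r^2 <= t <= T1 -> continuous Sw t).
  { intros t Ht. unfold Sw. apply (c_lsum (fun x t => vm G x * phi x ^ 2 * (laplacian G (fun y => v y t) x) ^ 2)).
    intros. apply cR_mult. apply cR_const. apply c_sq. apply Hwc; auto. }
  assert (F1 : RInt (Sq G (BL r) w) A T1 <= RInt Sw a T1).
  { apply Rle_trans with (RInt Sw A T1). 2:{ apply RInt_mono_int; try lra. intros; apply HSwc; lra. intros. unfold Sw.
      apply lsum_nonneg. intros. apply Rmult_le_pos. apply Rmult_le_pos. left; apply vm_pos. apply pow2_ge_0. apply pow2_ge_0. }
    apply RInt_le'; auto. intros; apply Sq_cont; intros; apply Hwc; lra. intros; apply HSwc; lra.
    intros t Ht. unfold Sq, Sw, w.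
    rewrite (lsum_ext_in _ (fun x => vm G x * phi x ^ 2 * laplacian G (fun y => v y t) x ^ 2) (BL r)).
    apply lsum_incl_le; auto. intros x Hx. apply HL. apply Hrl in Hx. lra.
    intros. apply Rmult_le_pos. apply Rmult_le_pos. left; apply vm_pos. apply pow2_ge_0. apply pow2_ge_0.
    intros x Hx. apply Hrl in Hx. unfold phi. rewrite cut_one; auto. ring. }
  assert (F3 : RInt Sw a T1 <= / 3 * Dq G L phi v a + 2 / r^2 * RInt DP a T1).
  { apply (intB G rho phi Phi v L r a T1); auto; try lra. intros; apply HPhi01. intros; apply Hd; lra. }
  assert (F4 : Dq G L phi v a <= DP a).
  { unfold DP, Dq. apply esum_le. intros. pose proof (Hle x). pose proof (Hle y). pose proof (Hphi0 x). pose proof (Hphi0 y).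
    apply Rmult_le_compat_r. apply pow2_ge_0. apply Rmult_le_compat; auto. }
  set (X := RInt DP (A - r^2) T1).
  assert (F5 : DP a * r^2 <= X).
  { replace (A - (A - r^2)) with (r^2) in Hga by ring. eapply Rle_trans. apply Hga.
    apply RInt_mono_int_r; try lra. intros; apply HDPc; lra. intros; auto. }
  assert (F6 : RInt DP a T1 <= X). { apply RInt_mono_int; try lra. intros; apply HDPc; lra. intros; auto. }
  set (Y := RInt SL (A - 2*r^2) T1).
  assert (F7 : SL a' * r^2 <= Y).
  { replace (A - r^2 - (A - 2*r^2)) with (r^2) in Hga' by ring. eapply Rle_trans. apply Hga'.
    apply RInt_mono_int_r; try lra. intros; apply HSLc; lra. intros; auto. }
  assert (F8 : RInt DP a' T1 <= 2 * SL a' + 12 / r'^2 * RInt SL a' T1).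
  { apply (intA G rho Phi v L r' a' T1); auto; try lra. intros; apply Hd; lra. }
  assert (F9 : X <= RInt DP a' T1). { apply RInt_mono_int; try lra. intros; apply HDPc; lra. intros; auto. }
  assert (F10 : RInt SL a' T1 <= Y). { apply RInt_mono_int; try lra. intros; apply HSLc; lra. intros; auto. }
  assert (Hr'2 : r^2 <= r'^2). { unfold r'. nra. }
  assert (F11 : 12 / r'^2 * RInt SL a' T1 <= 12 / r^2 * Y).
  { apply Rmult_le_compat. unfold Rdiv; apply Rmult_le_pos; [lra|left; apply Rinv_0_lt_compat; nra].
    apply RInt_nonneg. lra. intros; apply HSLc; lra. intros; auto.
    unfold Rdiv. apply Rmult_le_compat_l. lra. apply Rinv_le_contravar; auto. auto. }
  assert (HY0 : 0 <= Y). { apply RInt_nonneg. lra. intros; apply HSLc; lra. intros; auto. }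
  assert (HX0 : 0 <= X). { apply RInt_nonneg. lra. intros; apply HDPc; lra. intros; auto. }
  clearbody X Y. change (CompleteSpace.sort R_CompleteNormedModule) with R in *.
  assert (HX : X <= 14 / r^2 * Y).
  { assert (2 * SL a' <= 2 / r^2 * Y). { apply (Rmult_le_reg_r (r^2)); auto. 
      replace (2 / r ^ 2 * Y * r ^ 2) with (2 * Y) by (field; lra). lra. }
    replace (14 / r^2 * Y) with (2 / r^2 * Y + 12 / r^2 * Y) by (field; lra). lra. }
  assert (HDPa : DP a <= X / r^2). { apply (Rmult_le_reg_r (r^2)); auto. replace (X / r^2 * r^2) with X by (field; lra). lra. }
  assert (HT : RInt (Sq G (BL r) w) A T1 <= 7 / 3 / r^2 * X).
  { assert (2 / r^2 * RInt DP a T1 <= 2 / r^2 * X). { apply Rmult_le_compat_l; auto. unfold Rdiv; apply Rmult_le_pos; [lra|left; apply Rinv_0_lt_compat; auto]. }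
    assert (/3 * Dq G L phi v a <= /3 * (X / r^2)) by lra.
    replace (7 / 3 / r^2 * X) with (/3 * (X / r^2) + 2 / r^2 * X) by (field; lra). lra. }
  eapply Rle_trans. apply HT.
  replace (42 / r^4 * Y) with (7/3/r^2 * (18 / r^2 * Y)) by (field; lra).
  apply Rmult_le_compat_l. unfold Rdiv; apply Rmult_le_pos; [lra|left; apply Rinv_0_lt_compat; auto].
  eapply Rle_trans. apply HX. apply Rmult_le_compat_r; auto. unfold Rdiv. apply Rmult_le_compat_r. left; apply Rinv_0_lt_compat; auto. lra.
Qed.


Definition vj {V} (G : wgraph V) (U : V -> R -> R) (j : nat) (x : V) (t : R) : R := lapn G j (fun y => U y t) x.

Lemma RInt_bound (g : R -> R) a b B : a <= b -> (forall t, a <= t <= b -> continuous g t) ->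
  (forall t, a <= t <= b -> g t <= B) -> RInt g a b <= B * (b - a).
Proof. intros. replace (B * (b - a)) with (RInt (fun _ => B) a b). apply RInt_le'; auto.
  intros; apply cR_const. rewrite RInt_const. simpl. unfold scal; simpl. unfold mult; simpl. ring. Qed.

Lemma iter_est {V} (G : wgraph V) rho s x0 BL (U : V -> R -> R) T1 :
  intrinsic_metric G rho -> 1 <= s -> (forall x y, adj G x y -> rho x y <= s) -> ball_lists rho x0 BL ->
  (forall j x t, t <= T1 -> is_derive (vj G U j x) t (vj G U (S j) x t)) ->
  forall j r A, s <= r -> A <= T1 ->
  RInt (Sq G (BL r) (vj G U j)) A T1 <= 42^j / r^(4*j) * RInt (Sq G (BL (7^j * r)) (vj G U 0)) (A - 51^j * r^2) T1.
Proof.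
  intros HI Hs Hj HBL Hd.
  assert (Hc : forall j x t, t <= T1 -> continuous (vj G U j x) t) by (intros; eapply d_cont; apply Hd; auto).
  assert (Mono : forall R0 a a', a <= a' -> a' <= T1 -> RInt (Sq G (BL R0) (vj G U 0)) a' T1 <= RInt (Sq G (BL R0) (vj G U 0)) a T1).
  { intros. apply RInt_mono_int; auto; try lra. intros; apply Sq_cont; intros; apply Hc; lra. intros; apply Sq_nonneg. }
  intros j; induction j; intros r A Hsr HA.
  - simpl. unfold Rdiv. rewrite Rinv_1, !Rmult_1_l.
    apply Mono. assert (0 <= r^2) by apply pow2_ge_0. lra. auto.
  - assert (Hr : 0 < r) by lra.
    eapply Rle_trans. apply (step G rho s x0 BL (vj G U j) r A T1); auto.
    { intros x t Ht. apply Hd. lra. }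
    assert (IH := IHj (7 * r) (A - 2 * r^2) ltac:(lra) ltac:(assert (0 <= r^2) by apply pow2_ge_0; lra)).
    set (I0 := RInt (Sq G (BL (7 ^ j * (7 * r))) (vj G U 0)) (A - 2 * r ^ 2 - 51 ^ j * (7 * r) ^ 2) T1) in IH.
    set (I1 := RInt (Sq G (BL (7 ^ S j * r)) (vj G U 0)) (A - 51 ^ S j * r ^ 2) T1).
    assert (E7 : 7 ^ j * (7 * r) = 7 ^ S j * r) by (simpl; ring).
    assert (HI01 : I0 <= I1).
    { unfold I0, I1. rewrite E7. apply Mono. 
      assert (1 <= 51^j) by (apply pow_R1_Rle; lra). assert (0 <= r^2) by apply pow2_ge_0. simpl. nra.
      assert (0 <= 51^j * (7*r)^2) by (apply Rmult_le_pos; [apply pow_le; lra|apply pow2_ge_0]). 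
      assert (0 <= r^2) by apply pow2_ge_0. lra. }
    assert (HI0 : 0 <= I0). { unfold I0. apply RInt_nonneg. assert (0 <= r^2) by apply pow2_ge_0.
      assert (0 <= 51^j * (7*r)^2) by (apply Rmult_le_pos; [apply pow_le; lra|apply pow2_ge_0]). lra.
      intros; apply Sq_cont; intros; apply Hc; lra. intros; apply Sq_nonneg. }
    clearbody I0 I1. change (CompleteSpace.sort R_CompleteNormedModule) with R in *.
    assert (P1 : 0 < r^(4*j)) by (apply pow_lt; lra).
    assert (P2 : r^(4*j) <= (7*r)^(4*j)) by (apply pow_incr; lra).
    assert (P3 : 0 < r^4) by (apply pow_lt; lra).
    assert (P4 : 0 < 42^j) by (apply pow_lt; lra).
    assert (E : r^(4 * S j) = r^4 * r^(4*j)). { replace (4 * S j)%nat with (4 + 4*j)%nat by lia. apply pow_add. }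
    rewrite E. simpl (42 ^ S j).
    assert (42 ^ j / (7 * r) ^ (4 * j) * I0 <= 42^j / r^(4*j) * I1).
    { unfold Rdiv. rewrite !Rmult_assoc. apply Rmult_le_compat_l. lra.
      apply Rmult_le_compat; auto. left; apply Rinv_0_lt_compat; lra. apply Rinv_le_contravar; auto. }
    replace (42 * 42 ^ j / (r ^ 4 * r ^ (4 * j)) * I1) with (42 / r^4 * (42^j / r^(4*j) * I1)) by (field; lra).
    apply Rmult_le_compat_l. unfold Rdiv; apply Rmult_le_pos; [lra|left; apply Rinv_0_lt_compat; auto].
    lra.
Qed.


Lemma pow_ge_self (r : R) (e : nat) : 1 <= r -> (1 <= e)%nat -> r <= r^e.
Proof. intros. replace r with (r^1) at 1 by ring. apply Rle_pow; auto. Qed.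

Lemma kill (I K r1 : R) (e : nat) : (1 <= e)%nat -> (forall r, r1 <= r -> 1 <= r -> I <= K / r^e) -> I <= 0.
Proof. intros He H. destruct (Rle_dec I 0) as [|Hn]; auto. exfalso. apply Rnot_le_lt in Hn.
  set (r := Rmax r1 (Rmax 1 (K / I + 1))).
  assert (H1 : r1 <= r) by apply Rmax_l. assert (H2 : 1 <= r) by (eapply Rle_trans; [|apply Rmax_r]; apply Rmax_l).
  assert (H3 : K / I + 1 <= r) by (eapply Rle_trans; [|apply Rmax_r]; apply Rmax_r).
  specialize (H r H1 H2). pose proof (pow_ge_self r e H2 He).
  assert (0 < r^e) by lra.
  destruct (Rle_dec K 0).
  - assert (K / r^e <= 0). { unfold Rdiv. assert (0 < / r^e) by (apply Rinv_0_lt_compat; auto). nra. } lra.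
  - assert (K / r^e <= K / r). { unfold Rdiv. apply Rmult_le_compat_l. lra. apply Rinv_le_contravar; lra. }
    assert (K / r < I). { apply (Rmult_lt_reg_r r). lra. replace (K / r * r) with K by (field; lra).
      assert (K / I < r) by lra. apply (Rmult_lt_reg_r (/ I)). apply Rinv_0_lt_compat; auto.
      replace (K * / I) with (K / I) by reflexivity. replace (I * r * / I) with r by (field; lra). auto. }
    lra.
Qed.

Lemma vanish {V} (G : wgraph V) rho s x0 BL (U : V -> R -> R) Cv p CU q J :
  intrinsic_metric G rho -> 1 <= s -> (forall x y, adj G x y -> rho x y <= s) -> ball_lists rho x0 BL ->
  (forall R, 1 <= R -> lsum (vm G) (BL R) <= Cv * R^p) ->
  (forall R, 1 <= R -> forall x t, rho x x0 <= R -> - R^2 <= t <= 0 -> Rabs (U x t) <= CU * R^q) ->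
  (forall j x t, t < 0 -> is_derive (vj G U j x) t (vj G U (S j) x t)) ->
  (2 + p + 2 * q < 4 * J)%nat ->
  forall x t, t < 0 -> vj G U J x t = 0.
Proof.
  intros HI Hs Hj HBL HV HU Hd HJ x t Ht.
  pose proof HI as [Hn [Hz [Hsym [Htri Hint]]]].
  set (T1 := t / 2). set (A0 := t - 1).
  assert (Hd' : forall j x t, t <= T1 -> is_derive (vj G U j x) t (vj G U (S j) x t)) by (intros; apply Hd; unfold T1 in *; lra).
  assert (Hc : forall j x t, t <= T1 -> continuous (vj G U j x) t) by (intros; eapply d_cont; apply Hd'; auto).
  set (r0 := Rmax s (rho x x0)).
  assert (Hr0s : s <= r0) by apply Rmax_l. assert (Hr0x : rho x x0 <= r0) by apply Rmax_r.
  assert (HCv : 0 <= Cv). { specialize (HV 1 ltac:(lra)). rewrite pow1 in HV. 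
    assert (0 <= lsum (vm G) (BL 1)) by (apply lsum_nonneg; intros; left; apply vm_pos). lra. }
  assert (HCU : 0 <= CU). { specialize (HU 1 ltac:(lra) x0 0 ltac:(rewrite Hz; lra) ltac:(lra)). rewrite pow1 in HU.
    pose proof (Rabs_pos (U x0 0)). lra. }
  set (e := (4 * J - (2 + p + 2 * q))%nat).
  set (c := Rabs A0 + 51^J + 7^J + 1).
  assert (Hc51 : 0 < 51^J) by (apply pow_lt; lra). assert (Hc7 : 0 < 7^J) by (apply pow_lt; lra).
  assert (Hc1 : 1 <= c) by (unfold c; pose proof (Rabs_pos A0); lra).
  set (K := 42^J * (CU^2 * c^(2*q)) * (Cv * 7^(J*p)) * (T1 - A0 + 51^J)).
  set (I := fun r => RInt (Sq G (BL r) (vj G U J)) A0 T1).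
  assert (HA0T1 : A0 < T1) by (unfold A0, T1; lra).
  assert (Hbound : forall r, r0 <= r -> 1 <= r -> I r0 <= K / r^e).
  { intros r Hr Hr1.
    assert (Hrpos : 0 < r) by lra.
    destruct (HBL r0) as [ND0 H0]; [lra|]. destruct (HBL r) as [ND1 H1]; [lra|].
    assert (Ia : I r0 <= I r).
    { unfold I. apply RInt_le'. lra. intros; apply Sq_cont; intros; apply Hc; lra. intros; apply Sq_cont; intros; apply Hc; lra.
      intros tau Htau. unfold Sq. apply lsum_incl_le; auto. intros y Hy. apply H1. apply H0 in Hy. lra.
      intros. apply Rmult_le_pos. left; apply vm_pos. apply pow2_ge_0. }
    assert (Ib := iter_est G rho s x0 BL U T1 HI Hs Hj HBL Hd' J r A0 ltac:(lra) ltac:(lra)).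
    set (R7 := 7^J * r). set (Rc := c * r).
    set (B := CU * Rc^q).
    assert (HR7 : 1 <= R7) by (unfold R7; assert (1 <= 7^J) by (apply pow_R1_Rle; lra); nra).
    assert (HRc : R7 <= Rc) by (unfold R7, Rc, c; pose proof (Rabs_pos A0); nra).
    destruct (HBL R7) as [ND7 H7]; [lra|].
    assert (Ic : RInt (Sq G (BL R7) (vj G U 0)) (A0 - 51^J * r^2) T1 <= (B^2 * (Cv * R7^p)) * (T1 - (A0 - 51^J * r^2))).
    { apply RInt_bound. assert (0 <= 51^J * r^2) by (apply Rmult_le_pos; [lra|apply pow2_ge_0]). lra.
      intros; apply Sq_cont; intros; apply Hc; lra.
      intros tau Htau. unfold Sq. 
      apply Rle_trans with (lsum (fun x => B^2 * vm G x) (BL R7)).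
      - apply lsum_le. intros y Hy. apply H7 in Hy. unfold vj. simpl.
        assert (HUy : Rabs (U y tau) <= B).
        { apply HU. lra. lra. split; [|unfold T1 in *; lra].
          assert (- (Rc)^2 <= A0 - 51^J * r^2); [|lra].
          unfold Rc, c. pose proof (Rabs_pos A0). pose proof (Rle_abs (-A0)). rewrite Rabs_Ropp in H2.
          assert (1 <= r^2) by (rewrite <- (pow1 2); apply pow_incr; lra).
          assert ((Rabs A0 + 51 ^ J + 7 ^ J + 1) <= (Rabs A0 + 51 ^ J + 7 ^ J + 1)^2) by nra.
          assert (0 <= 7^J) by lra.
          nra. }
        assert (U y tau ^2 <= B^2) by (apply pow_maj_Rabs; auto).
        pose proof (vm_pos _ G y). nra.
      - rewrite lsum_scal. apply Rmult_le_compat_l. apply pow2_ge_0. apply HV. auto. }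
    assert (P1 : 0 < r^e) by (apply pow_lt; lra).
    assert (P2 : 0 < r^(4*J)) by (apply pow_lt; lra).
    assert (E1 : r^(4*J) = r^e * (r^2 * r^p * r^(2*q))).
    { replace (4*J)%nat with (e + (2 + p + 2*q))%nat by (unfold e; lia). rewrite !pow_add. ring. }
    assert (E2 : B^2 = CU^2 * c^(2*q) * r^(2*q)).
    { unfold B, Rc. rewrite !Rpow_mult_distr. replace (2*q)%nat with (q*2)%nat by lia. rewrite !pow_mult. ring. }
    assert (E3 : R7^p = 7^(J*p) * r^p). { unfold R7. rewrite Rpow_mult_distr, pow_mult. ring. }
    assert (Hr2 : 1 <= r^2) by (rewrite <- (pow1 2); apply pow_incr; lra).
    assert (E4 : T1 - (A0 - 51^J * r^2) <= (T1 - A0 + 51^J) * r^2) by nra.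
    assert (N1 : 0 <= B^2 * (Cv * R7^p)).
    { apply Rmult_le_pos. apply pow2_ge_0. apply Rmult_le_pos; auto. apply pow_le; lra. }
    assert (N2 : 0 <= 42^J / r^(4*J)). { unfold Rdiv. apply Rmult_le_pos. apply pow_le; lra. left; apply Rinv_0_lt_compat; auto. }
    eapply Rle_trans. apply Ia. eapply Rle_trans. apply Ib.
    change (CompleteSpace.sort R_CompleteNormedModule) with R in *.
    eapply Rle_trans. apply Rmult_le_compat_l. apply N2. apply Ic.
    eapply Rle_trans. apply Rmult_le_compat_l. apply N2. apply Rmult_le_compat_l. apply N1. apply E4.
    right. unfold K. rewrite E1, E2, E3. field. repeat split; try apply pow_nonzero; lra. }
  assert (HI0 : I r0 <= 0) by (apply (kill (I r0) K r0 e); [unfold e; lia| intros; apply Hbound; auto]).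
  destruct (HBL r0) as [ND0 H0]; [lra|].
  assert (HS : Sq G (BL r0) (vj G U J) t = 0).
  { apply (RInt_zero_pt _ A0 T1); auto. intros; apply Sq_cont; intros; apply Hc; lra. intros; apply Sq_nonneg.
    unfold A0, T1; lra. }
  assert (vm G x * vj G U J x t ^2 <= 0).
  { rewrite <- HS. unfold Sq. replace (vm G x * vj G U J x t ^2) with (lsum (fun x => vm G x * vj G U J x t ^2) (x :: nil)) by (simpl; ring).
    apply lsum_incl_le. constructor; [simpl; auto|constructor]. intros y Hy. destruct Hy as [<-|[]]. apply H0. auto.
    intros. apply Rmult_le_pos. left; apply vm_pos. apply pow2_ge_0. }
  pose proof (vm_pos _ G x). pose proof (pow2_ge_0 (vj G U J x t)).
  assert (vj G U J x t ^2 = 0) by nra.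
  destruct (Req_dec (vj G U J x t) 0) as [|Hne]; auto. exfalso. apply (pow_nonzero _ 2 Hne). auto.
Qed.


Lemma ball_R (x e y : R) : ball x e y <-> Rabs (y - x) < e.
Proof. unfold ball; simpl. unfold AbsRing_ball, abs, minus, plus, opp; simpl. tauto. Qed.

Lemma at_left_eps (f : R -> R) l : filterlim f (at_left 0) (locally l) ->
  forall eps, 0 < eps -> exists d, 0 < d /\ forall h, -d < h < 0 -> Rabs (f h - l) < eps.
Proof. intros H eps Heps.
  assert (Hl : locally l (fun y => Rabs (y - l) < eps)).
  { exists (mkposreal eps Heps). intros y Hy. apply ball_R in Hy. exact Hy. }
  specialize (H _ Hl). destruct H as [d Hd]. exists d. split. apply cond_pos.
  intros h Hh. apply Hd. apply ball_R. rewrite Rminus_0_r. apply Rabs_def1; lra. lra. Qed.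

Lemma at_right_eps (f : R -> R) l : filterlim f (at_right 0) (locally l) ->
  forall eps, 0 < eps -> exists d, 0 < d /\ forall h, 0 < h < d -> Rabs (f h - l) < eps.
Proof. intros H eps Heps.
  assert (Hl : locally l (fun y => Rabs (y - l) < eps)).
  { exists (mkposreal eps Heps). intros y Hy. apply ball_R in Hy. exact Hy. }
  specialize (H _ Hl). destruct H as [d Hd]. exists d. split. apply cond_pos.
  intros h Hh. apply Hd. apply ball_R. rewrite Rminus_0_r. apply Rabs_def1; lra. lra. Qed.

Lemma eps_at_left (f : R -> R) l : 
  (forall eps, 0 < eps -> exists d, 0 < d /\ forall h, -d < h < 0 -> Rabs (f h - l) < eps) ->
  filterlim f (at_left 0) (locally l).
Proof. intros H P [eps HP]. destruct (H eps (cond_pos eps)) as [d [Hd Hd']].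
  exists (mkposreal d Hd). intros y Hy Hneg. apply HP. apply ball_R. apply Hd'.
  apply ball_R in Hy. assert (Hy' : Rabs (y - 0) < d) by exact Hy. rewrite Rminus_0_r in Hy'. apply Rabs_def2 in Hy'. lra. Qed.

Definition dq (f : R -> R) (t h : R) : R := (f (t + h) - f t) / h.

Lemma two_sided_derive (f : R -> R) t l :
  filterlim (dq f t) (at_left 0) (locally l) -> filterlim (dq f t) (at_right 0) (locally l) -> is_derive f t l.
Proof. intros H1 H2. apply is_derive_Reals. intros eps Heps.
  destruct (at_left_eps _ _ H1 eps Heps) as [d1 [Hd1 Hd1']].
  destruct (at_right_eps _ _ H2 eps Heps) as [d2 [Hd2 Hd2']].
  assert (0 < Rmin d1 d2) by (apply Rmin_pos; auto).
  exists (mkposreal _ H). intros h Hh0 Hh. simpl in Hh.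
  pose proof (Rmin_l d1 d2). pose proof (Rmin_r d1 d2). apply Rabs_def2 in Hh.
  destruct (Rlt_or_le h 0). apply (Hd1' h). lra.
  apply (Hd2' h). lra. Qed.

Definition cl (f : R -> R) : Prop := filterlim f (at_left 0) (locally (f 0)).

Lemma cl_of_dq (f : R -> R) l : filterlim (dq f 0) (at_left 0) (locally l) -> cl f.
Proof. intros H. apply eps_at_left. intros eps Heps.
  destruct (at_left_eps _ _ H 1 ltac:(lra)) as [d [Hd Hd']].
  assert (0 < eps / (Rabs l + 1)) by (apply Rdiv_lt_0_compat; auto; pose proof (Rabs_pos l); lra).
  exists (Rmin d (eps / (Rabs l + 1))). split. apply Rmin_pos; auto.
  intros h Hh. pose proof (Rmin_l d (eps / (Rabs l + 1))). pose proof (Rmin_r d (eps / (Rabs l + 1))).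
  specialize (Hd' h ltac:(lra)). unfold dq in Hd'. rewrite Rplus_0_l in Hd'.
  set (q := (f h - f 0) / h) in *.
  assert (E : f h - f 0 = h * q) by (unfold q; field; lra).
  rewrite E, Rabs_mult. 
  assert (Rabs q < Rabs l + 1). { pose proof (Rabs_triang_inv q l). lra. }
  assert (Rabs h < eps / (Rabs l + 1)) by (rewrite Rabs_left; lra).
  pose proof (Rabs_pos q). pose proof (Rabs_pos h). pose proof (Rabs_pos l).
  apply Rle_lt_trans with (Rabs h * (Rabs l + 1)). apply Rmult_le_compat_l; lra.
  apply Rlt_le_trans with (eps / (Rabs l + 1) * (Rabs l + 1)). apply Rmult_lt_compat_r; lra.
  right. field. lra. Qed.

Lemma flim_plus {T} {F : (T -> Prop) -> Prop} {FF : Filter F} (f g : T -> R) a b :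
  filterlim f F (locally a) -> filterlim g F (locally b) -> filterlim (fun x => f x + g x) F (locally (a + b)).
Proof. intros. eapply filterlim_comp_2; eauto. apply (filterlim_plus a b). Qed.

Lemma flim_scal {T} {F : (T -> Prop) -> Prop} {FF : Filter F} (f : T -> R) c a :
  filterlim f F (locally a) -> filterlim (fun x => c * f x) F (locally (c * a)).
Proof. intros. eapply filterlim_comp; eauto. apply (filterlim_scal_r c a). Qed.

Lemma flim_const {T} {F : (T -> Prop) -> Prop} {FF : Filter F} (c : R) :
  filterlim (fun _ : T => c) F (locally c).
Proof. apply filterlim_const. Qed.

Lemma flim_minus {T} {F : (T -> Prop) -> Prop} {FF : Filter F} (f g : T -> R) a b :
  filterlim f F (locally a) -> filterlim g F (locally b) -> filterlim (fun x => f x - g x) F (locally (a - b)).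
Proof. intros. unfold Rminus. apply flim_plus; auto.
  apply (filterlim_ext (fun x => -1 * g x)). intros; ring. replace (- b) with (-1 * b) by ring. apply flim_scal; auto. Qed.

Lemma flim_ext {T} {F : (T -> Prop) -> Prop} {FF : Filter F} (f g : T -> R) a :
  (forall x, f x = g x) -> filterlim f F (locally a) -> filterlim g F (locally a).
Proof. intros. eapply filterlim_ext; eauto. Qed.

Lemma flim_lsum {A T} {F : (T -> Prop) -> Prop} {FF : Filter F} (f : A -> T -> R) (a : A -> R) l :
  (forall y, In y l -> filterlim (f y) F (locally (a y))) -> filterlim (fun x => lsum (fun y => f y x) l) F (locally (lsum a l)).
Proof. induction l; intros H; simpl. apply flim_const. apply flim_plus. apply H; simpl; auto. apply IHl; intros; apply H; simpl; auto. Qed.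

Lemma flim_nsum {T} {F : (T -> Prop) -> Prop} {FF : Filter F} (f : nat -> T -> R) (a : nat -> R) n :
  (forall i, (i < n)%nat -> filterlim (f i) F (locally (a i))) -> filterlim (fun x => nsum n (fun i => f i x)) F (locally (nsum n a)).
Proof. induction n; intros H; simpl. apply flim_const. apply flim_plus. apply IHn; intros; apply H; lia. apply H; lia. Qed.

Lemma flim_lap {V T} (G : wgraph V) {F : (T -> Prop) -> Prop} {FF : Filter F} (f : V -> T -> R) (a : V -> R) x :
  (forall y, filterlim (f y) F (locally (a y))) -> filterlim (fun z => laplacian G (fun y => f y z) x) F (locally (laplacian G a x)).
Proof. intros H. unfold laplacian. apply (flim_lsum (fun y z => ew G x y / vm G x * (f y z - f x z))).
  intros. apply flim_scal. apply flim_minus; auto. Qed.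

Lemma flim_lapn {V T} (G : wgraph V) {F : (T -> Prop) -> Prop} {FF : Filter F} n (f : V -> T -> R) (a : V -> R) x :
  (forall y, filterlim (f y) F (locally (a y))) -> filterlim (fun z => lapn G n (fun y => f y z) x) F (locally (lapn G n a x)).
Proof. revert x. induction n; intros x H; simpl. auto.
  apply (flim_lap G (fun y z => lapn G n (fun y0 => f y0 z) y)). intros; apply IHn; auto. Qed.

Lemma dq_lapn {V} (G : wgraph V) n (u : V -> R -> R) x t h :
  dq (vj G u n x) t h = lapn G n (fun y => dq (u y) t h) x.
Proof. unfold dq, vj. unfold Rdiv.
  rewrite (lapn_ext G n (fun y => (u y (t + h) - u y t) * / h) (fun y => nsum 2 (fun i => (if Nat.eq_dec i 0 then /h else -/h) * (if Nat.eq_dec i 0 then u y (t+h) else u y t)))).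
  rewrite lapn_nsum. simpl. ring.
  intros y. simpl. ring. Qed.

Lemma anc_derive {V} (G : wgraph V) (u : V -> R -> R) : ancient_solution G u ->
  forall j x t, t < 0 -> is_derive (vj G u j x) t (vj G u (S j) x t).
Proof. intros H j x t Ht. apply two_sided_derive.
  - apply (flim_ext (fun h => lapn G j (fun y => dq (u y) t h) x)). intros; symmetry; apply dq_lapn.
    unfold vj. rewrite lapn_S'. apply (flim_lapn G j (fun y h => dq (u y) t h)). intros y. 
    destruct (H y t ltac:(lra)) as [H1 _]. exact H1.
  - apply (flim_ext (fun h => lapn G j (fun y => dq (u y) t h) x)). intros; symmetry; apply dq_lapn.
    unfold vj. rewrite lapn_S'. apply (flim_lapn G j (fun y h => dq (u y) t h)). intros y. 
    destruct (H y t ltac:(lra)) as [_ H2]. exact (H2 Ht).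
Qed.

Lemma anc_cl {V} (G : wgraph V) (u : V -> R -> R) : ancient_solution G u -> forall j x, cl (vj G u j x).
Proof. intros H j x. unfold cl, vj. apply (flim_lapn G j (fun y h => u y h)). intros y.
  destruct (H y 0 ltac:(lra)) as [H1 _]. apply (cl_of_dq (u y) _ H1). Qed.


Lemma cl_zero_left (f : R -> R) : cl f -> (forall t, t < 0 -> f t = 0) -> f 0 = 0.
Proof. intros H Hz. destruct (Req_dec (f 0) 0) as [|Hne]; auto. exfalso.
  destruct (at_left_eps f (f 0) H (Rabs (f 0)) (Rabs_pos_lt _ Hne)) as [d [Hd Hd']].
  specialize (Hd' (-d/2) ltac:(lra)). rewrite Hz in Hd' by lra. rewrite Rminus_0_l, Rabs_Ropp in Hd'. lra. Qed.

Lemma cont_cl (f : R -> R) : continuous f 0 -> cl f.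
Proof. intros H P HP. specialize (H P HP). destruct H as [d Hd]. exists d. intros y Hy _. apply Hd; auto. Qed.

Lemma cl_minus (f g : R -> R) : cl f -> cl g -> cl (fun t => f t - g t).
Proof. intros. unfold cl. apply flim_minus; auto. Qed.

Lemma zero_deriv_left (g : R -> R) : (forall t, t < 0 -> is_derive g t 0) -> cl g -> g 0 = 0 -> forall t, t <= 0 -> g t = 0.
Proof. intros Hd Hc H0 t Ht. destruct (Req_dec t 0) as [->|Htn]; auto.
  assert (Ht' : t < 0) by lra.
  assert (Hconst : forall t', t < t' < 0 -> g t' = g t).
  { intros t' Ht''. destruct (MVT_cor2 g (fun _ => 0) t t') as [c [Hc1 Hc2]]. lra.
    intros c Hc'. apply is_derive_Reals. apply Hd. lra. lra. }
  destruct (Req_dec (g t) 0) as [|Hne]; auto. exfalso.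
  destruct (at_left_eps g (g 0) Hc (Rabs (g t)) (Rabs_pos_lt _ Hne)) as [d [Hd1 Hd2]].
  set (t' := Rmax (t/2) (-d/2)).
  assert (t < t' < 0) by (unfold t', Rmax; destruct Rle_dec; lra).
  assert (-d < t' < 0) by (unfold t', Rmax; destruct Rle_dec; lra).
  specialize (Hd2 t' H1). rewrite Hconst in Hd2 by auto. rewrite H0, Rminus_0_r in Hd2. lra. Qed.

Lemma d_powt (d : nat) (t : R) : is_derive (fun t => t ^ d) t (INR d * t ^ pred d).
Proof. replace (INR d * t ^ pred d) with (INR d * 1 * t ^ pred d) by ring. apply (is_derive_pow (fun t => t)).
  apply (is_derive_id (K := R_AbsRing)). Qed.

Lemma taylor (w : nat -> R -> R) J : (forall j t, t < 0 -> is_derive (w j) t (w (S j) t)) -> (forall j, cl (w j)) ->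
  (forall t, t < 0 -> w J t = 0) ->
  forall n j, (j + n = J)%nat -> forall t, t <= 0 -> w j t = nsum n (fun d => w (j + d)%nat 0 * t ^ d / INR (fact d)).
Proof.
  intros Hd Hcl HJ n. induction n; intros j Hj t Ht.
  - simpl. rewrite Nat.add_0_r in Hj. subst j. destruct (Req_dec t 0) as [->|]. apply cl_zero_left; auto. apply HJ; lra.
  - set (F := fun t => nsum (S n) (fun d => w (j + d)%nat 0 * t ^ d / INR (fact d))).
    set (F' := fun t => nsum (S n) (fun d => w (j + d)%nat 0 * (INR d * t ^ pred d) / INR (fact d))).
    assert (HF : forall t, is_derive F t (F' t)).
    { intros s. unfold F, F'. apply (d_nsum (fun d t => w (j + d)%nat 0 * t ^ d / INR (fact d))
         (fun d t => w (j + d)%nat 0 * (INR d * t ^ pred d) / INR (fact d))). intros i _.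
      apply (is_derive_ext (fun t => (w (j+i)%nat 0 / INR (fact i)) * t^i)).
      intros t0; change (w (j + i)%nat 0 / INR (fact i) * t0 ^ i = w (j + i)%nat 0 * t0 ^ i / INR (fact i)); unfold Rdiv; ring.
      replace (w (j + i)%nat 0 * (INR i * s ^ pred i) / INR (fact i)) with (w (j + i)%nat 0 / INR (fact i) * (INR i * s ^ pred i)) by (unfold Rdiv; ring).
      apply dR_scal. apply d_powt. }
    assert (HF'e : forall t, t <= 0 -> F' t = w (S j) t).
    { intros s Hs. rewrite (IHn (S j)) by (auto; lia). unfold F'. rewrite nsum_shift. simpl (INR 0). 
      rewrite Rmult_0_l, Rmult_0_r, Rdiv_0_l, Rplus_0_l. apply nsum_ext. intros i _.
      replace (j + S i)%nat with (S j + i)%nat by lia. simpl (pred (S i)). rewrite fact_simpl, mult_INR.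
      pose proof (INR_fact_neq_0 i). rewrite S_INR. field. split; auto. pose proof (pos_INR i). lra. }
    set (g := fun t => w j t - F t).
    assert (Hg : forall t, t < 0 -> is_derive g t 0).
    { intros s Hs. replace 0 with (w (S j) s - F' s) by (rewrite HF'e; lra). apply dR_minus. apply Hd; auto. apply HF. }
    assert (Hgcl : cl g). { apply cl_minus. apply Hcl. apply cont_cl. eapply d_cont. apply HF. }
    assert (Hg0 : g 0 = 0).
    { unfold g, F. rewrite nsum_shift. rewrite nsum_ext with (G := fun _ => 0). rewrite nsum_zero.
      rewrite Nat.add_0_r. simpl. field. intros i _. simpl pow. rewrite Rmult_0_l, Rmult_0_r. unfold Rdiv. apply Rmult_0_l. }
    pose proof (zero_deriv_left g Hg Hgcl Hg0 t Ht). unfold g in H. change (w j t = F t). lra.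
Qed.


Lemma nsum_S n F : nsum (S n) F = nsum n F + F n.
Proof. reflexivity. Qed.

Lemma sum_f_nsum F n : sum_f_R0 F n = nsum (S n) F.
Proof. induction n; simpl; [ring|]. simpl in IHn. rewrite IHn. ring. Qed.

Lemma C_nn n : Binomial.C n n = 1.
Proof. unfold Binomial.C. rewrite Nat.sub_diag. simpl. field. apply INR_fact_neq_0. Qed.

Lemma C_Snn n : Binomial.C (S n) n = INR (S n).
Proof. unfold Binomial.C. replace (S n - n)%nat with 1%nat by lia. rewrite fact_simpl, mult_INR. simpl (fact 1).
  pose proof (INR_fact_neq_0 n). simpl (INR 1). field. auto. Qed.

Lemma binom_diff t h j : (t + h)^j - t^j = nsum j (fun i => Binomial.C j i * t^i * h^(j-i)).
Proof. rewrite binomial, sum_f_nsum. simpl. rewrite C_nn, Nat.sub_diag. simpl. ring. Qed.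

Lemma nsum_extend n j (F : nat -> R) : (j <= n)%nat -> nsum n (fun i => if Nat.ltb i j then F i else 0) = nsum j F.
Proof. induction n; intros H.
  - replace j with 0%nat by lia. reflexivity.
  - destruct (Nat.eq_dec j (S n)) as [->|Hne].
    + apply nsum_ext. intros i Hi. destruct (Nat.ltb_spec i (S n)); auto; lia.
    + simpl. rewrite IHn by lia. destruct (Nat.ltb_spec n j); [lia|ring].
Qed.

Lemma diff_poly (c : nat -> R) m h : exists c' : nat -> R, c' m = INR (S m) * h * c (S m) /\
  forall t, nsum (S (S m)) (fun j => c j * (t + h)^j) - nsum (S (S m)) (fun j => c j * t^j) = nsum (S m) (fun i => c' i * t^i).
Proof.
  exists (fun i => nsum (S (S m)) (fun j => if Nat.ltb i j then c j * Binomial.C j i * h^(j-i) else 0)). split.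
  - rewrite (nsum_S (S m)). rewrite nsum_ext with (G := fun _ => 0). rewrite nsum_zero.
    destruct (Nat.ltb_spec m (S m)); [|lia]. rewrite C_Snn. replace (S m - m)%nat with 1%nat by lia. ring.
    intros i Hi. destruct (Nat.ltb_spec m i); [lia|auto].
  - intros t. rewrite <- nsum_minus.
    rewrite (nsum_ext _ _ (fun j => nsum (S m) (fun i => if Nat.ltb i j then c j * Binomial.C j i * h^(j-i) * t^i else 0))).
    + rewrite nsum_swap. apply nsum_ext. intros i _. rewrite <- (Rmult_comm (t^i)), <- nsum_scal. apply nsum_ext.
      intros j _. destruct (Nat.ltb i j); ring.
    + intros j Hj. replace (c j * (t + h) ^ j - c j * t ^ j) with (c j * ((t + h) ^ j - t ^ j)) by ring.
      rewrite binom_diff. rewrite <- nsum_scal. rewrite <- (nsum_extend (S m) j) by lia. apply nsum_ext.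
      intros i _. destruct (Nat.ltb i j); ring.
Qed.

Lemma fd_top d : forall (c : nat -> R) a h B, 0 < h ->
  (forall t, a <= t <= a + INR d * h -> Rabs (nsum (S d) (fun j => c j * t^j)) <= B) ->
  INR (fact d) * h^d * Rabs (c d) <= 2^d * B.
Proof.
  induction d; intros c a h B Hh Hb.
  - specialize (Hb a ltac:(simpl; lra)). simpl in *. rewrite Rplus_0_l, Rmult_1_r in Hb. lra.
  - destruct (diff_poly c d h) as [c' [Hc' Hdiff]].
    assert (IH := IHd c' a h (2 * B) Hh).
    assert (Hq : forall t, a <= t <= a + INR d * h -> Rabs (nsum (S d) (fun j => c' j * t^j)) <= 2 * B).
    { intros t Ht. rewrite <- Hdiff. rewrite S_INR in Hb.
      eapply Rle_trans. apply Rabs_triang. rewrite Rabs_Ropp.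
      pose proof (Hb (t + h) ltac:(lra)). pose proof (Hb t ltac:(pose proof (pos_INR d); nra)). lra. }
    specialize (IH Hq). rewrite Hc' in IH.
    rewrite fact_simpl, mult_INR. simpl (h ^ S d). simpl (2 ^ S d).
    rewrite !Rabs_mult in IH. rewrite (Rabs_right (INR (S d))) in IH by (apply Rle_ge, pos_INR).
    rewrite (Rabs_right h) in IH by lra. nra.
Qed.


Lemma elim_lin (N : nat) : forall (eqs : list (nat -> R)), (length eqs < N)%nat ->
  exists a : nat -> R, (exists i, (i < N)%nat /\ a i <> 0) /\
    forall l, In l eqs -> nsum N (fun i => l i * a i) = 0.
Proof.
  induction N as [|n IH]; intros eqs Hlen; [simpl in Hlen; lia|].
  destruct (classic (exists l0, In l0 eqs /\ l0 n <> 0)) as [[l0 [Hin Hnz]]|Hall].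
  - destruct (in_split _ _ Hin) as [pre [post Heq]].
    set (eqs' := map (fun l => fun i => l i - l n / l0 n * l0 i) (pre ++ post)).
    assert (Hl' : (length eqs' < n)%nat).
    { unfold eqs'. rewrite length_map. rewrite Heq in Hlen. rewrite length_app in *. simpl in Hlen. lia. }
    destruct (IH eqs' Hl') as [b [[i [Hi Hbi]] Hb]].
    set (S0 := nsum n (fun i => l0 i * b i)).
    exists (fun i => if Nat.eq_dec i n then - S0 / l0 n else b i). split.
    + exists i. split. lia. destruct (Nat.eq_dec i n); [lia|auto].
    + intros l Hl. simpl. destruct (Nat.eq_dec n n) as [_|]; [|lia].
      rewrite (nsum_ext n _ (fun i => l i * b i)) by (intros j Hj; destruct (Nat.eq_dec j n); [lia|auto]).
      rewrite Heq in Hl. apply in_app_or in Hl. 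
      assert (Hgen : In l (pre ++ post) -> nsum n (fun i => l i * b i) + l n * (- S0 / l0 n) = 0).
      { intros Hl2. assert (In (fun i => l i - l n / l0 n * l0 i) eqs') by (unfold eqs'; apply (in_map (fun l => fun i => l i - l n / l0 n * l0 i)); auto).
        specialize (Hb _ H). 
        rewrite (nsum_ext n _ (fun i => l i * b i - l n / l0 n * (l0 i * b i))) in Hb by (intros; ring).
        rewrite nsum_minus, nsum_scal in Hb. fold S0 in Hb.
        replace (l n * (- S0 / l0 n)) with (- (l n / l0 n * S0)) by (field; auto). lra. }
      destruct Hl as [Hl|[<-|Hl]].
      * apply Hgen. apply in_or_app; auto.
      * fold S0. field. auto.
      * apply Hgen. apply in_or_app; auto.
  - exists (fun i => if Nat.eq_dec i n then 1 else 0). split.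
    + exists n. split. lia. destruct (Nat.eq_dec n n); [lra|lia].
    + intros l Hl. simpl. destruct (Nat.eq_dec n n) as [_|]; [|lia].
      rewrite (nsum_ext n _ (fun _ => 0)) by (intros j Hj; destruct (Nat.eq_dec j n); [lia|ring]).
      rewrite nsum_zero. assert (l n = 0). { destruct (Req_dec (l n) 0); auto. exfalso. apply Hall. exists l; auto. }
      rewrite H. ring.
Qed.

Definition tri {X : Type} (P : (X -> R) -> Prop) (n : nat) : Prop :=
  exists (f : nat -> X -> R) (p : nat -> X), (forall i, (i < n)%nat -> P (f i)) /\
    (forall i, (i < n)%nat -> f i (p i) <> 0) /\ (forall i j, (i < n)%nat -> (j < i)%nat -> f i (p j) = 0).

Lemma tri_indep {X : Type} (P : (X -> R) -> Prop) n : tri P n -> has_indep (fun _ => True) P n.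
Proof.
  intros [f [p [HS [Hnz Hz]]]]. exists f. split; auto.
  intros c Hc. 
  assert (forall i, (i < n)%nat -> forall k, (k <= i)%nat -> c k = 0).
  { induction i; intros Hi k Hk.
    - replace k with 0%nat by lia. specialize (Hc (p 0%nat) I).
      rewrite (nsum_ext n _ (fun j => if Nat.eq_dec j 0 then c 0%nat * f 0%nat (p 0%nat) else 0)) in Hc.
      rewrite nsum_single in Hc by lia. apply Rmult_integral in Hc. destruct Hc; auto. exfalso. apply (Hnz 0%nat); auto.
      intros j Hj. destruct (Nat.eq_dec j 0) as [->|]; auto. rewrite Hz by lia. ring.
    - destruct (Nat.eq_dec k (S i)) as [->|Hne]; [|apply IHi; lia].
      specialize (Hc (p (S i)) I).
      rewrite (nsum_ext n _ (fun j => if Nat.eq_dec j (S i) then c (S i) * f (S i) (p (S i)) else 0)) in Hc.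
      rewrite nsum_single in Hc by lia. apply Rmult_integral in Hc. destruct Hc; auto. exfalso. apply (Hnz (S i)); auto.
      intros j Hj. destruct (Nat.eq_dec j (S i)) as [->|]; auto.
      destruct (Nat.lt_ge_cases j (S i)). rewrite (IHi ltac:(lia) j ltac:(lia)). ring.
      rewrite Hz by lia. ring. }
  intros i Hi. apply (H i Hi i). lia.
Qed.

Definition separating {X : Type} (P : (X -> R) -> Prop) (pts : list X) : Prop :=
  forall f, P f -> (forall x, In x pts -> f x = 0) -> forall x, f x = 0.

Lemma separate {X : Type} (P : (X -> R) -> Prop) n :
  (exists pts, (length pts <= n)%nat /\ separating P pts) \/ tri P (S n).
Proof.
  induction n.
  - destruct (classic (separating P nil)) as [H|H]. left. exists nil. split; auto.
    right. unfold separating in H.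
    apply not_all_ex_not in H. destruct H as [f H].
    apply imply_to_and in H. destruct H as [Hf H]. apply imply_to_and in H. destruct H as [_ H].
    apply not_all_ex_not in H. destruct H as [x Hx].
    exists (fun _ => f), (fun _ => x). repeat split; intros; auto. lia.
  - destruct IHn as [[pts [Hl Hs]]|[f [p [HS [Hnz Hz]]]]].
    + left. exists pts. split; auto.
    + set (pts := map p (seq 0 (S n))).
      destruct (classic (separating P pts)) as [H|H].
      * left. exists pts. split; auto. unfold pts. rewrite length_map, length_seq. lia.
      * right. unfold separating in H.
        apply not_all_ex_not in H. destruct H as [g H].
        apply imply_to_and in H. destruct H as [Hg H]. apply imply_to_and in H. destruct H as [Hgz H].
        apply not_all_ex_not in H. destruct H as [x Hx].
        exists (fun i => if Nat.eq_dec i (S n) then g else f i), (fun i => if Nat.eq_dec i (S n) then x else p i).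
        repeat split.
        -- intros i Hi. destruct (Nat.eq_dec i (S n)); auto. apply HS. lia.
        -- intros i Hi. destruct (Nat.eq_dec i (S n)); auto. apply Hnz. lia.
        -- intros i j Hi Hj. destruct (Nat.eq_dec i (S n)); destruct (Nat.eq_dec j (S n)); try lia.
           ++ apply Hgz. unfold pts. apply in_map. apply in_seq. lia.
           ++ apply Hz; lia.
Qed.


Lemma Rpower_pos x y : 0 < Rpower x y.
Proof. unfold Rpower. apply exp_pos. Qed.

Lemma kill_real (X Kc r1 e : R) : 0 < e -> (forall R, r1 <= R -> 1 <= R -> X <= Kc * Rpower R (-e)) -> X <= 0.
Proof. intros He H. destruct (Rle_dec X 0) as [|Hn]; auto. exfalso. apply Rnot_le_lt in Hn.
  set (y := Rabs Kc / X + 1).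
  assert (Hy : 1 <= y). { unfold y. assert (0 <= Rabs Kc / X) by (apply Rdiv_le_0_compat; [apply Rabs_pos|auto]). lra. }
  set (R0 := Rmax r1 (Rmax 1 (Rpower y (/ e)))).
  assert (H1 : r1 <= R0) by apply Rmax_l. assert (H2 : 1 <= R0) by (eapply Rle_trans; [|apply Rmax_r]; apply Rmax_l).
  assert (H3 : Rpower y (/e) <= R0) by (eapply Rle_trans; [|apply Rmax_r]; apply Rmax_r).
  specialize (H R0 H1 H2).
  assert (HRe : y <= Rpower R0 e).
  { replace y with (Rpower (Rpower y (/e)) e). apply Rle_Rpower_l. lra. split; auto. apply Rpower_pos.
    rewrite Rpower_mult. rewrite Rinv_l by lra. apply Rpower_1. lra. }
  rewrite Rpower_Ropp in H.
  assert (0 < Rpower R0 e) by apply Rpower_pos.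
  assert (Kc * / Rpower R0 e <= Rabs Kc / y).
  { apply Rle_trans with (Rabs Kc * / Rpower R0 e). apply Rmult_le_compat_r. left; apply Rinv_0_lt_compat; auto. apply Rle_abs.
    unfold Rdiv. apply Rmult_le_compat_l. apply Rabs_pos. apply Rinv_le_contravar; lra. }
  assert (Rabs Kc / y < X).
  { apply (Rmult_lt_reg_r y). lra. replace (Rabs Kc / y * y) with (Rabs Kc) by (field; lra).
    unfold y. replace (X * (Rabs Kc / X + 1)) with (Rabs Kc + X) by (field; lra). lra. }
  lra.
Qed.

Lemma trunc_sum (F : nat -> R) J D : (D < J)%nat -> (forall d, (D < d)%nat -> (d < J)%nat -> F d = 0) -> nsum J F = nsum (S D) F.
Proof. induction J; intros H Hz. lia. destruct (Nat.eq_dec J D) as [->|Hne]. reflexivity.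
  simpl nsum at 1. rewrite IHJ by (try lia; intros; apply Hz; lia). rewrite (Hz J) by lia. ring. Qed.

Definition Lam (D : nat) : R := 2^D * INR (Nat.max D 1) ^ D / INR (fact D).

Lemma Lam_pos D : 0 < Lam D.
Proof. unfold Lam. apply Rdiv_lt_0_compat. apply Rmult_lt_0_compat. apply pow_lt; lra.
  apply pow_lt. apply lt_0_INR. lia. apply lt_0_INR. apply lt_O_fact. Qed.

Lemma coef_bound (c : nat -> R) D R B : 1 <= R ->
  (forall t, -R^2 <= t <= 0 -> Rabs (nsum (S D) (fun d => c d * t^d)) <= B) ->
  Rabs (c D) * R^(2*D) <= Lam D * B.
Proof. intros HR Hb.
  set (m := INR (Nat.max D 1)).
  assert (Hm : 1 <= m) by (unfold m; replace 1 with (INR 1) by reflexivity; apply le_INR; lia).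
  assert (HDm : INR D <= m) by (unfold m; apply le_INR; lia).
  assert (HR2 : 1 <= R^2) by (rewrite <- (pow1 2); apply pow_incr; lra).
  set (h := R^2 / m).
  assert (Hh : 0 < h) by (unfold h; apply Rdiv_lt_0_compat; lra).
  assert (Hfd := fd_top D c (-R^2) h B Hh).
  assert (Hrange : -R^2 + INR D * h <= 0).
  { unfold h. assert (INR D * (R^2/m) <= m * (R^2/m)) by (apply Rmult_le_compat_r; [left; auto|auto]).
    replace (m * (R^2/m)) with (R^2) in H by (field; lra). lra. }
  specialize (Hfd ltac:(intros t Ht; apply Hb; lra)).
  assert (Ehd : h^D * m^D = R^(2*D)). { unfold h. rewrite pow_mult. rewrite <- Rpow_mult_distr. f_equal. field. lra. }
  assert (Hf : 0 < INR (fact D)) by (apply lt_0_INR; apply lt_O_fact).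
  assert (0 < m^D) by (apply pow_lt; lra).
  unfold Lam. fold m. rewrite <- Ehd.
  apply (Rmult_le_reg_l (INR (fact D))); auto.
  replace (INR (fact D) * (2 ^ D * m ^ D / INR (fact D) * B)) with (2^D * B * m^D) by (field; lra).
  replace (INR (fact D) * (Rabs (c D) * (h ^ D * m ^ D))) with (INR (fact D) * h ^ D * Rabs (c D) * m^D) by ring.
  apply Rmult_le_compat_r; lra.
Qed.

Lemma Rpower_1_base y : Rpower 1 y = 1.
Proof. unfold Rpower. rewrite ln_1, Rmult_0_r. apply exp_0. Qed.

Lemma core {V} (G : wgraph V) rho x0 BL s (U : V -> R -> R) (k Cv CU : R) (p q K : nat) (pts : list V) :
  intrinsic_metric G rho -> 1 <= s -> (forall x y, adj G x y -> rho x y <= s) -> ball_lists rho x0 BL ->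
  (forall R, 1 <= R -> lsum (vm G) (BL R) <= Cv * R^p) ->
  (forall R, 1 <= R -> forall x t, rho x x0 <= R -> - R^2 <= t <= 0 -> Rabs (U x t) <= CU * Rpower R (2*k)) ->
  0 <= k -> 2 * k <= INR q -> k < INR K + 1 ->
  (forall j x t, t < 0 -> is_derive (vj G U j x) t (vj G U (S j) x t)) ->
  (forall j x, cl (vj G U j x)) ->
  separating (in_H G rho (2*k)) pts ->
  (forall d x, (d <= K)%nat -> In x pts -> vj G U d x 0 = 0) ->
  forall x t, t <= 0 -> U x t = 0.
Proof.
  intros HI Hs Hj HBL HV HU Hk Hq HK Hd Hcl Hsep Heq.
  pose proof HI as [Hn [Hz [Hsym [Htri Hint]]]].
  assert (HCU : 0 <= CU).
  { specialize (HU 1 ltac:(lra) x0 0 ltac:(rewrite Hz; lra) ltac:(lra)). rewrite Rpower_1_base in HU.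
    pose proof (Rabs_pos (U x0 0)). lra. }
  set (J := (3 + p + 2*q)%nat).
  assert (HUn : forall R, 1 <= R -> forall x t, rho x x0 <= R -> - R^2 <= t <= 0 -> Rabs (U x t) <= CU * R^q).
  { intros R HR x t Hx Ht. apply Rle_trans with (CU * Rpower R (2*k)). apply HU; auto. apply Rmult_le_compat_l; auto.
    rewrite <- Rpower_pow by lra. apply Rle_Rpower; lra. }
  assert (Hvan := vanish G rho s x0 BL U Cv p CU q J HI Hs Hj HBL HV HUn Hd ltac:(unfold J; lia)).
  assert (HvanJ0 : forall x, vj G U J x 0 = 0).
  { intros x. apply cl_zero_left. apply Hcl. intros; apply Hvan; auto. }
  set (Cd := fun d x => vj G U d x 0 / INR (fact d)).
  assert (Htay : forall x t, t <= 0 -> U x t = nsum J (fun d => Cd d x * t^d)).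
  { intros x t Ht. 
    assert (H := taylor (fun j t => vj G U j x t) J (fun j t Ht => Hd j x t Ht) (fun j => Hcl j x) (fun t Ht => Hvan x t Ht) J 0 ltac:(lia) t Ht).
    transitivity (vj G U 0 x t). reflexivity. cbv beta in H. rewrite H. apply nsum_ext. intros d _. unfold Cd. rewrite Nat.add_0_l. unfold Rdiv. ring. }
  assert (Hfact : forall d, 0 < INR (fact d)) by (intros; apply lt_0_INR; apply lt_O_fact).
  assert (Z : forall m, (m <= J)%nat -> forall d, (J - m <= d)%nat -> (d < J)%nat -> forall x, Cd d x = 0).
  { induction m; intros Hm d Hd1 Hd2 x. lia.
    destruct (Nat.eq_dec d (J - S m)) as [Ed|Hne]; [|apply IHm; lia].
    set (D := (J - S m)%nat) in *.
    assert (HDJ : (D < J)%nat) by lia.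
    assert (Hhigh : forall d', (D < d')%nat -> (d' < J)%nat -> forall y, Cd d' y = 0) by (intros; apply IHm; lia).
    assert (Hpoly : forall y t, t <= 0 -> U y t = nsum (S D) (fun d => Cd d y * t^d)).
    { intros y t Ht. rewrite Htay by auto. apply trunc_sum; auto. intros d' H1 H2. rewrite Hhigh by auto. ring. }
    assert (Hb : forall y R, 1 <= R -> rho y x0 <= R -> Rabs (Cd D y) * R^(2*D) <= Lam D * (CU * Rpower R (2*k))).
    { intros y R HR Hy. apply (coef_bound (fun d => Cd d y) D R). auto. intros t Ht. rewrite <- Hpoly by lra. apply HU; auto. }
    subst d.
    destruct (Rle_lt_dec (INR D) k) as [HDk|HDk].
    -
      assert (HDK : (D <= K)%nat). { assert (INR D < INR (S K)) by (rewrite S_INR; lra). apply INR_lt in H. lia. }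
      assert (HH : in_H G rho (2*k) (Cd D)).
      { split.
        - intros y. unfold Cd. 
          rewrite (lap_ext G _ (fun z => / INR (fact D) * vj G U D z 0 + 0 * vj G U D z 0)) by (intros; unfold Rdiv; ring).
          rewrite lap_lin. change (laplacian G (fun z => vj G U D z 0) y) with (vj G U (S D) y 0).
          assert (vj G U (S D) y 0 = 0).
          { destruct (Nat.eq_dec (S D) J) as [E|E]. rewrite E. apply HvanJ0.
            assert (Cd (S D) y = 0) by (apply Hhigh; lia). unfold Cd in H.
            pose proof (Hfact (S D)). apply Rmult_integral in H. destruct H; auto.
            exfalso. apply Rinv_neq_0_compat in H. auto. lra. }
          rewrite H. ring.
        - exists x0, (Lam D * CU). intros r Hr y Hy. unfold in_ball in Hy.
          set (R := Rmax r 1).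
          assert (HR1 : 1 <= R) by apply Rmax_r. assert (HRr : r <= R) by apply Rmax_l.
          specialize (Hb y R HR1 ltac:(lra)).
          assert (1 <= R^(2*D)) by (apply pow_R1_Rle; auto).
          pose proof (Rabs_pos (Cd D y)). pose proof (Lam_pos D). pose proof (Rpower_pos R (2*k)).
          assert (Hcd : Rabs (Cd D y) <= Lam D * (CU * Rpower R (2 * k))).
          { eapply Rle_trans; [|apply Hb]. rewrite <- (Rmult_1_r (Rabs (Cd D y))) at 1. apply Rmult_le_compat_l; auto. }
          assert (Hrp : Rpower R (2*k) <= Rpower (1 + r) (2*k)). { apply Rle_Rpower_l. lra. unfold R, Rmax; destruct Rle_dec; lra. }
          assert (0 <= Lam D * CU) by (apply Rmult_le_pos; lra).
          eapply Rle_trans. apply Hcd. rewrite <- Rmult_assoc. apply Rmult_le_compat_l; auto. }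
      apply (Hsep (Cd D) HH). intros y Hy. unfold Cd. rewrite Heq by auto. unfold Rdiv; ring.
    -
      assert (Hk0 : Rabs (Cd D x) <= 0).
      { apply (kill_real (Rabs (Cd D x)) (Lam D * CU) (rho x x0) (2 * INR D - 2 * k)). lra.
        intros R HR HR1. specialize (Hb x R HR1 HR).
        assert (HRp : R^(2*D) = Rpower R (2 * INR D)) by (rewrite <- Rpower_pow by lra; f_equal; rewrite mult_INR; simpl; ring).
        assert (0 < R^(2*D)) by (apply pow_lt; lra).
        assert (E : Rpower R (-(2 * INR D - 2 * k)) = Rpower R (2*k) / R^(2*D)).
        { rewrite HRp. unfold Rdiv. rewrite <- Rpower_Ropp, <- Rpower_plus. f_equal. ring. }
        rewrite E. apply (Rmult_le_reg_r (R^(2*D))); auto.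
        replace (Lam D * CU * (Rpower R (2 * k) / R ^ (2 * D)) * R ^ (2 * D)) with (Lam D * (CU * Rpower R (2*k))) by (field; lra).
        auto. }
      pose proof (Rabs_pos (Cd D x)). assert (Rabs (Cd D x) = 0) by lra.
      destruct (Req_dec (Cd D x) 0); auto. exfalso. apply Rabs_no_R0 in H1. auto. }
  intros x t Ht. rewrite Htay by auto. rewrite (nsum_ext J _ (fun _ => 0)). apply nsum_zero.
  intros d Hd'. rewrite (Z J ltac:(lia) d ltac:(lia) Hd' x). ring.
Qed.


Lemma nat_above (x : R) : exists n : nat, x < INR n.
Proof. destruct (archimed x) as [H1 _]. destruct (Z_le_gt_dec 0 (up x)) as [H|H].
  - exists (Z.to_nat (up x)). rewrite INR_IZR_INZ, Z2Nat.id by auto. lra.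
  - exists 0%nat. simpl. apply Z.gt_lt in H. apply IZR_lt in H. lra. Qed.

Lemma nat_floor (k : R) : 0 <= k -> exists K : nat, INR K <= k < INR K + 1.
Proof. intros Hk. destruct (nat_above k) as [n Hn]. revert Hn. induction n; intros Hn.
  simpl in Hn. lra. destruct (Rlt_le_dec k (INR n)). apply IHn; auto.
  exists n. rewrite S_INR in Hn. lra. Qed.

Lemma nodup_filter {A} (P : A -> Prop) (l0 : list A) : exists l, NoDup l /\ forall y, In y l <-> (In y l0 /\ P y).
Proof. induction l0 as [|a l0 IH].
  - exists nil. split. constructor. simpl; tauto.
  - destruct IH as [l [ND H]]. destruct (classic (P a /\ ~ In a l)) as [[Pa Na]|Hn].
    + exists (a :: l). split. constructor; auto. intros y. simpl. rewrite H. split.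
      intros [<-|[H1 H2]]; auto. intros [[<-|H1] H2]; auto.
    + exists l. split; auto. intros y. rewrite H. simpl. split. intros [H1 H2]; auto.
      intros [[<-|H1] H2]; auto. split; auto. apply NNPP. intros Hni. apply Hn. split; auto.
      intros Hl. apply H in Hl. tauto.
Qed.

Lemma ball_lists_exist {V} (rho : V -> V -> R) (x0 : V) : finite_balls rho -> exists BL, ball_lists rho x0 BL.
Proof. intros Hfb.
  destruct (choice_fun (fun (r : R) (l : list V) => 0 < r -> NoDup l /\ forall y, In y l <-> rho y x0 <= r)) as [BL HBL].
  { intros r. destruct (Rlt_le_dec 0 r) as [Hr|Hr].
    - destruct (Hfb x0 r Hr) as [l0 Hl0]. destruct (nodup_filter (fun y => rho y x0 <= r) l0) as [l [ND H]].
      exists l. intros _. split; auto. intros y. rewrite H. split. tauto. intros Hy. split; auto.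
    - exists nil. intros; lra. }
  exists BL. intros r Hr. apply HBL; auto. Qed.

Lemma find_M (Q : nat -> Prop) n1 : Q 0%nat -> ~ Q n1 -> exists M, Q M /\ ~ Q (S M).
Proof. induction n1; intros H0 Hn. contradiction. destruct (classic (Q n1)). exists n1; auto. apply IHn1; auto. Qed.

Lemma has_indep_0 {X} (D : X -> Prop) S : has_indep D S 0.
Proof. exists (fun _ _ => 0). split; intros; lia. Qed.

Lemma P_bound {V} (G : wgraph V) rho (x0 : V) k (u : V -> R -> R) : intrinsic_metric G rho -> 0 <= k -> in_P G rho (2*k) u ->
  exists B, 0 <= B /\ forall R, 1 <= R -> forall x t, rho x x0 <= R -> - R^2 <= t <= 0 -> Rabs (u x t) <= B * Rpower R (2*k).
Proof.
  intros HI Hk [_ [xi [Ci HC]]]. pose proof HI as [Hn [Hz [Hsym [Htri Hint]]]].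
  set (d := rho x0 xi).
  assert (Hd : 0 <= d) by apply Hn.
  exists (Rabs Ci * Rpower (2 + d) (2*k)). split. apply Rmult_le_pos. apply Rabs_pos. left; apply Rpower_pos.
  intros R HR x t Hx Ht.
  assert (Hb := HC (R + d) ltac:(lra) x t).
  assert (in_ball rho xi (R + d) x). { unfold in_ball. pose proof (Htri x x0 xi). unfold d. lra. }
  assert (- (R + d)^2 <= t <= 0) by nra.
  specialize (Hb H H0).
  eapply Rle_trans. apply Hb.
  apply Rle_trans with (Rabs Ci * Rpower (1 + (R + d)) (2 * k)). apply Rmult_le_compat_r. left; apply Rpower_pos. apply Rle_abs.
  rewrite Rmult_assoc. apply Rmult_le_compat_l. apply Rabs_pos.
  rewrite Rpower_mult_distr by lra. apply Rle_Rpower_l. lra. split. lra. nra.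
Qed.

Lemma comb_growth {V} (G : wgraph V) rho (x0 : V) k N (a : nat -> R) (u : nat -> V -> R -> R) :
  intrinsic_metric G rho -> 0 <= k -> (forall i, (i < N)%nat -> in_P G rho (2*k) (u i)) ->
  exists CU, forall R, 1 <= R -> forall x t, rho x x0 <= R -> - R^2 <= t <= 0 ->
    Rabs (nsum N (fun i => a i * u i x t)) <= CU * Rpower R (2*k).
Proof.
  intros HI Hk HP.
  destruct (choice_fun (fun i B => (i < N)%nat -> 0 <= B /\ forall R, 1 <= R -> forall x t, rho x x0 <= R -> - R^2 <= t <= 0 -> Rabs (u i x t) <= B * Rpower R (2*k))) as [B HB].
  { intros i. destruct (lt_dec i N) as [Hi|Hi].
    - destruct (P_bound G rho x0 k (u i) HI Hk (HP i Hi)) as [B HB]. exists B. auto.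
    - exists 0. intros; lia. }
  exists (nsum N (fun i => Rabs (a i) * B i)). intros R HR x t Hx Ht.
  eapply Rle_trans. apply nsum_abs. rewrite Rmult_comm, <- nsum_scal. apply nsum_le. intros i Hi.
  rewrite Rabs_mult. destruct (HB i Hi) as [_ Hb]. specialize (Hb R HR x t Hx Ht).
  replace (Rpower R (2 * k) * (Rabs (a i) * B i)) with (Rabs (a i) * (B i * Rpower R (2*k))) by ring.
  apply Rmult_le_compat_l. apply Rabs_pos. auto.
Qed.

Lemma vol_nat {V} (G : wgraph V) rho (x0 : V) BL alpha Cv : ball_lists rho x0 BL ->
  (forall r, 0 < r -> forall l : list V, NoDup l -> (forall y, In y l <-> in_ball rho x0 r y) -> lsum (vm G) l <= Cv * Rpower (1 + r) alpha) ->
  exists (Cv' : R) (p : nat), forall R, 1 <= R -> lsum (vm G) (BL R) <= Cv' * R^p.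
Proof.
  intros HBL Hv. destruct (nat_above alpha) as [p Hp].
  exists (Rabs Cv * 2^p), p. intros R HR. destruct (HBL R ltac:(lra)) as [ND H].
  eapply Rle_trans. apply (Hv R ltac:(lra) (BL R) ND). intros y. rewrite H. unfold in_ball. tauto.
  eapply Rle_trans. apply Rmult_le_compat_r. left; apply Rpower_pos. apply Rle_abs.
  rewrite Rmult_assoc. apply Rmult_le_compat_l. apply Rabs_pos.
  rewrite <- Rpow_mult_distr. rewrite <- Rpower_pow by lra.
  eapply Rle_trans. apply Rle_Rpower. lra. left; apply Hp.
  apply Rle_Rpower_l. apply pos_INR. lra.
Qed.

Lemma length_eqs {A B} (g : nat -> A -> B) (pts : list A) n :
  length (flat_map (fun d => map (g d) pts) (seq 0 n)) = (n * length pts)%nat.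
Proof. generalize 0%nat. induction n; intros s; simpl. auto. rewrite length_app, length_map, IHn. lia. Qed.

Lemma main_count {V} (G : wgraph V) rho k K (pts : list V) N :
  intrinsic_metric G rho -> finite_balls rho -> finite_jump_size G rho -> polynomial_volume_growth G rho ->
  1 <= k -> k < INR K + 1 -> separating (in_H G rho (2*k)) pts ->
  has_indep (@spacetime_dom V) (P_space G rho (2*k)) N -> (N <= S K * length pts)%nat.
Proof.
  intros HI Hfb [s0 Hs0] [x0 [alpha [Cv Hv]]] Hk HK Hsep [f [HfP Hind]].
  destruct (le_lt_dec N (S K * length pts)) as [|Hlt]; auto. exfalso.
  destruct (ball_lists_exist rho x0 Hfb) as [BL HBL].
  destruct (vol_nat G rho x0 BL alpha Cv HBL Hv) as [Cv' [p HV]].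
  set (s := Rmax s0 1).
  destruct (choice_fun (fun i (u : V -> R -> R) => (i < N)%nat -> in_P G rho (2*k) u /\ forall pt, spacetime_dom pt -> f i pt = u (fst pt) (snd pt))) as [u Hu].
  { intros i. destruct (lt_dec i N) as [Hi|Hi]. destruct (HfP i Hi) as [u Hu]. exists u; auto. exists (fun _ _ => 0). intros; lia. }
  set (eqs := flat_map (fun d => map (fun y => fun i => vj G (u i) d y 0) pts) (seq 0 (S K))).
  destruct (elim_lin N eqs) as [a [[i0 [Hi0 Ha0]] Ha]]. unfold eqs. rewrite length_eqs; lia.
  set (U := fun x t => nsum N (fun i => a i * u i x t)).
  assert (U1 : forall j x t, vj G U j x t = nsum N (fun i => a i * vj G (u i) j x t)).
  { intros. unfold vj, U. apply (lapn_nsum G j N a (fun i y => u i y t)). }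
  assert (Hanc : forall i, (i < N)%nat -> ancient_solution G (u i)) by (intros; apply Hu; auto).
  assert (Hd : forall j x t, t < 0 -> is_derive (vj G U j x) t (vj G U (S j) x t)).
  { intros j x t Ht. rewrite U1. apply (is_derive_ext (fun t => nsum N (fun i => a i * vj G (u i) j x t))).
    intros t0; symmetry; apply U1.
    apply (d_nsum (fun i t => a i * vj G (u i) j x t) (fun i t => a i * vj G (u i) (S j) x t)). intros. apply dR_scal. apply anc_derive; auto. }
  assert (Hcl : forall j x, cl (vj G U j x)).
  { intros j x. unfold cl. rewrite U1. apply (flim_ext (fun t => nsum N (fun i => a i * vj G (u i) j x t))). intros; symmetry; apply U1.
    apply (flim_nsum (fun i t => a i * vj G (u i) j x t) (fun i => a i * vj G (u i) j x 0)). intros. apply flim_scal. apply anc_cl; auto. }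
  destruct (comb_growth G rho x0 k N a u HI ltac:(lra) (fun i Hi => proj1 (Hu i Hi))) as [CU HU].
  destruct (nat_above (2*k)) as [q Hq].
  assert (Hz : forall x t, t <= 0 -> U x t = 0).
  { apply (core G rho x0 BL s U k Cv' CU p q K pts HI). apply Rmax_r.
    intros x y A. eapply Rle_trans. apply Hs0; auto. apply Rmax_l.
    auto. auto. exact HU. lra. lra. auto. auto. auto. auto.
    intros d x Hdk Hx. rewrite U1.
    assert (In (fun i => vj G (u i) d x 0) eqs).
    { unfold eqs. apply in_flat_map. exists d. split. apply in_seq. lia. apply (in_map (fun y => fun i => vj G (u i) d y 0)); auto. }
    specialize (Ha _ H). eapply eq_trans; [|exact Ha]. apply nsum_ext; intros; cbv beta; ring. }
  assert (a i0 = 0).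
  { apply Hind; auto. intros pt Hpt. rewrite (nsum_ext N _ (fun i => a i * u i (fst pt) (snd pt))).
    apply (Hz (fst pt) (snd pt) Hpt). intros i Hi. destruct (Hu i Hi) as [_ Heq]. rewrite Heq; auto. }
  contradiction.
Qed.

Theorem theorem1p2 (V : Type) (G : wgraph V) (rho : V -> V -> R) :
  intrinsic_metric G rho ->
  finite_balls rho ->
  finite_jump_size G rho ->
  polynomial_volume_growth G rho ->
  forall k : R, 1 <= k ->
    dim_le_mul (@spacetime_dom V) (P_space G rho (2 * k)) (k + 1)
               (fun _ : V => True) (in_H G rho (2 * k)).
Proof.
  intros HI Hfb Hj Hv k Hk N HN.
  destruct (classic (forall M, has_indep (fun _ : V => True) (in_H G rho (2*k)) M)) as [Hall|Hnot].
  - exists N. split; auto. pose proof (pos_INR N). nra.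
  - apply not_all_ex_not in Hnot. destruct Hnot as [n1 Hn1].
    destruct (find_M (has_indep (fun _ : V => True) (in_H G rho (2*k))) n1 (has_indep_0 _ _) Hn1) as [M [HM HM1]].
    destruct (separate (in_H G rho (2*k)) M) as [[pts [Hlen Hsep]]|Htri].
    2:{ exfalso. apply HM1. apply tri_indep. auto. }
    exists M. split; auto.
    destruct (nat_floor k ltac:(lra)) as [K [HK1 HK2]].
    assert (HNK := main_count G rho k K pts N HI Hfb Hj Hv Hk HK2 Hsep HN).
    assert (INR N <= INR (S K) * INR M).
    { rewrite <- mult_INR. apply le_INR. eapply Nat.le_trans. apply HNK. apply Nat.mul_le_mono_l. auto. }
    rewrite S_INR in H. pose proof (pos_INR M). nra.
Qed.
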